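(* Let $n\ge4$, let $c,\gamma\in\mathbb{F}_{2^n}\setminus\{0,1\}$, and let $F=\mathrm{Inv}\circ(0,1,\gamma)$. If $c\notin\{\gamma,\gamma^{-1},\gamma+1,(\gamma+1)^{-1}\}$ and $\mathrm{tr}\left(\frac{\gamma}{c(\gamma+1)}\right)=\mathrm{tr}(c^{-1}\gamma^{-1})=\mathrm{tr}\left(\frac{\gamma(c\gamma+1)}{(\gamma+1)^2}\right)=\mathrm{tr}\left(\frac{c\gamma}{(c\gamma+c+1)^2}\right)=\mathrm{tr}\left(\frac{\gamma(c+\gamma+1)}{c(\gamma+1)^2}\right)=\mathrm{tr}\left(\frac{\gamma(c+\gamma)}{c(\gamma+1)^2}\right)=\mathrm{tr}\left(\frac{c\gamma^2}{(c+\gamma)^2}\right)=\mathrm{tr}\left(\frac{c\gamma}{(c+\gamma+1)^2}\right)=\mathrm{tr}\left(\frac{c\gamma^2}{(c\gamma+1)^2}\right)=\mathrm{tr}\left(\frac{c\gamma}{\gamma+1}\right)=\mathrm{tr}(c\gamma^{-1})=\mathrm{tr}\left(\frac{(c\gamma+c+1)\gamma}{(\gamma+1)^2}\right)=1,$ then ${}_c\Delta_F=3$.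
   Context: $\mathrm{Inv}(x)=x^{2^n-2}$ on $\mathbb{F}_{2^n}$. $(0,1,\gamma)$ is the $3$-cycle sending $0\mapsto1$, $1\mapsto\gamma$, $\gamma\mapsto0$ and fixing all other elements; thus $F(0)=1$, $F(1)=\gamma^{-1}$, $F(\gamma)=0$ and $F(x)=x^{-1}$ otherwise. $\mathrm{tr}$ is the absolute trace $\mathbb{F}_{2^n}\to\mathbb{F}_2$. For $c\in\mathbb{F}_{2^n}$, ${}_cD_aF(x)=F(x+a)+cF(x)$; ${}_c\Delta_F(a,b)$ is the number of $x\in\mathbb{F}_{2^n}$ with ${}_cD_aF(x)=b$; and ${}_c\Delta_F=\max\{{}_c\Delta_F(a,b): a,b\in\mathbb{F}_{2^n},\ a\neq 0 \text{ if } c=1\}$. *)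

(* Defs.v *)
(* F_{2^n} is modelled as an arbitrary finite field F of
   characteristic 2 with #|F| = 2^n (unique up to isomorphism). *)
From mathcomp Require Import all_boot all_order all_algebra all_field.
Set Implicit Arguments. Unset Strict Implicit. Unset Printing Implicit Defensive.
Import GRing.Theory.
Local Open Scope ring_scope.

Definition Inv (F : finFieldType) (x : F) : F := x ^+ (#|F| - 2)%N.

Definition cyc3 (F : finFieldType) (g : F) (x : F) : F :=
  if x == 0 then 1 else if x == 1 then g else if x == g then 0 else x.

Definition Fswap (F : finFieldType) (g : F) (x : F) : F := Inv (cyc3 g x).

(* absolute trace F_{2^n} -> F_2 (valued in the prime subfield of F) *)
Definition tr (F : finFieldType) (n : nat) (x : F) : F :=
  \sum_(i < n) x ^+ (2 ^ i)%N.

Definition cDeltaAB (F : finFieldType) (f : F -> F) (c a b : F) : nat :=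
  #|[set x : F | f (x + a) + c * f x == b]|.

Definition cDelta (F : finFieldType) (f : F -> F) (c : F) : nat :=
  \max_(p : F * F | (c != 1) || (p.1 != 0)) cDeltaAB f c p.1 p.2.

(* Main.v *)
Require Import Defs.
From mathcomp Require Import all_boot all_order all_algebra all_field.
From mathcomp Require Import ring.
Import GRing.Theory.
Local Open Scope ring_scope.

Ltac nzt := repeat (match goal with |- is_true (_ && _) => apply/andP; split end); try (exact: oner_neq0); try assumption.
Ltac nzp := repeat first [ exact: oner_neq0 | assumption | apply: mulf_neq0 | apply: invr_neq0 | apply: expf_neq0 ].

Lemma two_eq0 (F : finFieldType) : (2%N \in [pchar F]) -> (1 + 1 : F) = 0.
Proof. by move=> /pcharf0; rewrite -[2%N]/(1+1)%N natrD. Qed.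

Lemma addxx2 (F : fieldType) (two : (1 + 1 : F) = 0) (x : F) : x + x = 0.
Proof. by rewrite -{1 2}[x]mulr1 -mulrDr two mulr0. Qed.

Lemma oppr2 (F : fieldType) (two : (1 + 1 : F) = 0) (x : F) : - x = x.
Proof. by apply/eqP; rewrite -subr_eq0 -opprD addxx2 // oppr0. Qed.

Lemma add_eq0_2 (F : fieldType) (two : (1 + 1 : F) = 0) (x y : F) :
  (x + y == 0) = (x == y).
Proof. by rewrite -[y in x + y]oppr2 // subr_eq0. Qed.

Lemma InvE (F : finFieldType) (x : F) : (2 < #|F|)%N -> Inv x = x^-1.
Proof.
move=> hq; rewrite /Inv; have [->|nz] := eqVneq x 0.
  rewrite invr0 expr0n; have -> : (#|F| - 2 == 0)%N = false.
    by apply/negbTE; rewrite subn_eq0 -ltnNge.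
  by [].
apply: (mulIf nz); rewrite mulVf // -exprSr.
have -> : (#|F| - 2).+1 = (#|F|.-1)%N by case: #|F| hq => // [[|[|k]]].
apply: (mulIf nz); rewrite mul1r -exprSr prednK ?expf_card //.
by apply: leq_trans hq.
Qed.

Lemma frob_iter (F : fieldType) (two : (1 + 1 : F) = 0) (x y : F) (i : nat) :
  (x + y) ^+ (2 ^ i) = x ^+ (2 ^ i) + y ^+ (2 ^ i).
Proof.
elim: i => [|i IH]; first by rewrite !expn0 !expr1.
rewrite expnSr !exprM IH. ring: two.
Qed.

Lemma trD (F : finFieldType) (two : (1 + 1 : F) = 0) n (x y : F) :
  tr n (x + y) = tr n x + tr n y.
Proof. by rewrite /tr -big_split; apply: eq_bigr => i _; rewrite frob_iter. Qed.

Lemma trAS (F : finFieldType) (two : (1 + 1 : F) = 0) n (y : F) :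
  #|F| = (2 ^ n)%N -> tr n (y ^+ 2 + y) = 0.
Proof.
move=> hq; rewrite trD //.
have -> : tr n (y ^+ 2) = \sum_(0 <= i < n) y ^+ (2 ^ i.+1).
  by rewrite /tr big_mkord; apply: eq_bigr => i _; rewrite -exprM -expnS.
have : \sum_(0 <= i < n) (y ^+ (2 ^ i.+1) - y ^+ (2 ^ i)) = y ^+ (2 ^ n) - y ^+ (2 ^ 0).
  by rewrite (telescope_sumr (fun i => y ^+ (2 ^ i))).
rewrite sumrB -hq expf_card expn0 expr1 subrr => /eqP; rewrite subr_eq0 => /eqP ->.
by rewrite /tr big_mkord addxx2.
Qed.

Lemma tr_contra1 (F : finFieldType) (two : (1 + 1 : F) = 0) n (h y : F) :
  #|F| = (2 ^ n)%N -> tr n h = 1 -> h = y ^+ 2 + y -> False.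
Proof. by move=> hq Ht Eh; move: Ht; rewrite Eh trAS // => /eqP; rewrite eq_sym oner_eq0. Qed.

Lemma tr_contra3 (F : finFieldType) (two : (1 + 1 : F) = 0) n (h1 h2 h3 y : F) :
  #|F| = (2 ^ n)%N -> tr n h1 = 1 -> tr n h2 = 1 -> tr n h3 = 1 ->
  h1 + h2 + h3 = y ^+ 2 + y -> False.
Proof.
move=> hq H1 H2 H3 Eh; have := @trAS F two n y hq; rewrite -Eh !trD // H1 H2 H3.
by rewrite two add0r => /eqP; rewrite oner_eq0.
Qed.
Lemma quad_contra (F : finFieldType) (two : (1 + 1 : F) = 0) n (h A B C0 a : F) :
  #|F| = (2 ^ n)%N -> B != 0 -> A * a ^+ 2 + B * a + C0 = 0 -> h = A * C0 / B ^+ 2 ->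
  tr n h = 1 -> False.
Proof.
move=> hq nB P Eh Ht; apply: (@tr_contra1 F two n h (A * a / B) hq Ht).
rewrite Eh; have -> : A * C0 / B ^+ 2 = (A * a / B) ^+ 2 + A * a / B + A / B ^+ 2 * (A * a ^+ 2 + B * a + C0).
  by field: two.
by rewrite P mulr0 addr0.
Qed.

Lemma addKr2 (F : fieldType) (two : (1 + 1 : F) = 0) (x y z : F) :
  (x + y == z) = (x == z + y).
Proof. by rewrite -[y in x + y](@oppr2 _ two) subr_eq. Qed.

Record Hyp (F : finFieldType) (n : nat) (c g : F) : Prop := MkHyp {
  two : (1 + 1 : F) = 0;
  hq : #|F| = (2 ^ n)%N;
  hn : (4 <= n)%N;
  hc0 : c != 0; hc1 : c != 1; hg0 : g != 0; hg1 : g != 1;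
  hcg : c != g; hcgi : c != g^-1; hcg1 : c != g + 1; hcg1i : c != (g + 1)^-1;
  t1 : tr n (g / (c * (g + 1))) = 1;
  t2 : tr n (c^-1 * g^-1) = 1;
  t3 : tr n (g * (c * g + 1) / (g + 1) ^+ 2) = 1;
  t4 : tr n (c * g / (c * g + c + 1) ^+ 2) = 1;
  t5 : tr n (g * (c + g + 1) / (c * (g + 1) ^+ 2)) = 1;
  t6 : tr n (g * (c + g) / (c * (g + 1) ^+ 2)) = 1;
  t7 : tr n (c * g ^+ 2 / (c + g) ^+ 2) = 1;
  t8 : tr n (c * g / (c + g + 1) ^+ 2) = 1;
  t9 : tr n (c * g ^+ 2 / (c * g + 1) ^+ 2) = 1;
  t10 : tr n (c * g / (g + 1)) = 1;
  t11 : tr n (c * g^-1) = 1;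
  t12 : tr n ((c * g + c + 1) * g / (g + 1) ^+ 2) = 1 }.
Arguments two {F n c g}.
Arguments hq {F n c g}.
Arguments hn {F n c g}.
Arguments hc0 {F n c g}.
Arguments hc1 {F n c g}.
Arguments hg0 {F n c g}.
Arguments hg1 {F n c g}.
Arguments hcg {F n c g}.
Arguments hcgi {F n c g}.
Arguments hcg1 {F n c g}.
Arguments hcg1i {F n c g}.
Arguments t1 {F n c g}.
Arguments t2 {F n c g}.
Arguments t3 {F n c g}.
Arguments t4 {F n c g}.
Arguments t5 {F n c g}.
Arguments t6 {F n c g}.
Arguments t7 {F n c g}.
Arguments t8 {F n c g}.
Arguments t9 {F n c g}.
Arguments t10 {F n c g}.
Arguments t11 {F n c g}.
Arguments t12 {F n c g}.

Lemma nz_g1 {F n c g} (HH : Hyp F n c g) : g + 1 != 0.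
Proof. by rewrite add_eq0_2 ?(two HH) // (hg1 HH). Qed.
Lemma nz_1g {F n c g} (HH : Hyp F n c g) : 1 + g != 0.
Proof. by rewrite addrC (nz_g1 HH). Qed.
Lemma nz_c1 {F n c g} (HH : Hyp F n c g) : c + 1 != 0.
Proof. by rewrite add_eq0_2 ?(two HH) // (hc1 HH). Qed.
Lemma nz_1c {F n c g} (HH : Hyp F n c g) : 1 + c != 0.
Proof. by rewrite addrC (nz_c1 HH). Qed.
Lemma nz_cpg {F n c g} (HH : Hyp F n c g) : c + g != 0.
Proof. by rewrite add_eq0_2 ?(two HH) // (hcg HH). Qed.
Lemma nz_cpg1 {F n c g} (HH : Hyp F n c g) : c + g + 1 != 0.
Proof. by rewrite add_eq0_2 ?(two HH) // addKr2 ?(two HH) // addrC (hcg1 HH). Qed.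
Lemma nz_cg1 {F n c g} (HH : Hyp F n c g) : c * g + 1 != 0.
Proof.
rewrite add_eq0_2 ?(two HH) //; apply/negP => /eqP E; move/eqP: (hcgi HH); apply.
by apply: (mulIf (hg0 HH)); rewrite mulVf ?(hg0 HH).
Qed.
Lemma nz_cgc1 {F n c g} (HH : Hyp F n c g) : c * g + c + 1 != 0.
Proof.
rewrite add_eq0_2 ?(two HH) //; apply/negP => /eqP E; move/eqP: (hcg1i HH); apply.
have {}E : c * (g + 1) = 1 by rewrite mulrDr mulr1.
by apply: (mulIf (nz_g1 HH)); rewrite mulVf ?(nz_g1 HH).
Qed.

Lemma card_gt2 (F : finFieldType) n : #|F| = (2 ^ n)%N -> (4 <= n)%N -> (2 < #|F|)%N.
Proof.
move=> -> h4; apply: (@leq_trans (2 ^ 4)) => //; by rewrite leq_exp2l.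
Qed.

Lemma G0 (F : finFieldType) (g : F) : (2 < #|F|)%N -> Fswap g 0 = 1.
Proof. by move=> h; rewrite /Fswap /cyc3 eqxx InvE // invr1. Qed.
Lemma G1 (F : finFieldType) (g : F) : (2 < #|F|)%N -> Fswap g 1 = g^-1.
Proof. by move=> h; rewrite /Fswap /cyc3 oner_eq0 eqxx InvE. Qed.
Lemma Gg (F : finFieldType) (g : F) : (2 < #|F|)%N -> g != 0 -> g != 1 -> Fswap g g = 0.
Proof. by move=> h g0 g1; rewrite /Fswap /cyc3 (negbTE g0) (negbTE g1) eqxx InvE // invr0. Qed.
Lemma Gx (F : finFieldType) (g x : F) : (2 < #|F|)%N -> x != 0 -> x != 1 -> x != g ->
  Fswap g x = x^-1.
Proof. by move=> h x0 x1 xg; rewrite /Fswap /cyc3 (negbTE x0) (negbTE x1) (negbTE xg) InvE. Qed.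

Definition Dv {F : finFieldType} (g c a x : F) := Fswap g (x + a) + c * Fswap g x.

Ltac pre HH :=
  move: (two HH) (hq HH) (@card_gt2 _ _ (hq HH) (hn HH)) (hc0 HH) (hc1 HH) (hg0 HH) (hg1 HH)
        (hcg HH) (hcgi HH) (hcg1 HH) (hcg1i HH) => two hq hF hc0 hc1 hg0 hg1 hcg hcgi hcg1 hcg1i;
  move: (nz_1g HH) => nz_1g;
  move: (nz_g1 HH) (nz_c1 HH) (nz_1c HH) (nz_cpg HH) (nz_cpg1 HH) (nz_cg1 HH) (nz_cgc1 HH)
    => nz_g1 nz_c1 nz_1c nz_cpg nz_cpg1 nz_cg1 nz_cgc1.

Lemma lin_contra (F : fieldType) (x y K L R : F) : K != 0 -> x != y -> (x - y) * K = L - R -> L = R -> False.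
Proof.
move=> K0 xy E LR; move: E; rewrite LR subrr => /eqP.
by rewrite mulf_eq0 subr_eq0 (negbTE xy) (negbTE K0).
Qed.

Lemma nL1 (F : fieldType) (two : (1 + 1 : F) = 0) (x y : F) : x != y -> x + y != 0.
Proof. by rewrite add_eq0_2. Qed.
Lemma nL2 (F : fieldType) (x y : F) : y != 0 -> x + y != x.
Proof. by move=> h; apply/negP => /eqP E; move: h; rewrite -(addKr x y) E addNr eqxx. Qed.
Lemma nL2' (F : fieldType) (x y : F) : x != 0 -> x + y != y.
Proof. by rewrite addrC; apply: nL2. Qed.
Lemma nL3 (F : fieldType) (two : (1 + 1 : F) = 0) (x y z : F) : x != z + y -> x + y != z.
Proof. by rewrite addKr2. Qed.

Lemma gvals {F n c g} (HH : Hyp F n c g) (a : F) : a != 0 -> a != 1 -> a != g -> a != g + 1 ->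
  Dv g c a 0 = a^-1 + c /\ Dv g c a 1 = (1 + a)^-1 + c / g /\ Dv g c a g = (g + a)^-1 /\
      Dv g c a a = 1 + c / a /\ Dv g c a (a + 1) = g^-1 + c / (a + 1) /\ Dv g c a (a + g) = c / (a + g).
Proof.
pre HH => a0 a1 ag ag1.
have ha : Fswap g a = a^-1 by rewrite Gx.
have h1a : Fswap g (1 + a) = (1 + a)^-1.
  rewrite Gx //; first by rewrite nL1 // eq_sym.
    exact: nL2.
  by rewrite addrC nL3.
have hga : Fswap g (g + a) = (g + a)^-1.
  rewrite Gx //; first by rewrite nL1 // eq_sym.
    by rewrite addrC nL3 // addrC.
  exact: nL2.
have haa : forall y, a + y + a = y.
  by move=> y; rewrite addrC addrA addxx2 // add0r.
rewrite /Dv; split; [|split; [|split; [|split; [|split]]]].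
- by rewrite add0r ha G0 // mulr1.
- by rewrite h1a G1.
- by rewrite hga Gg // mulr0 addr0.
- by rewrite addxx2 // G0 // ha.
- rewrite addrAC addxx2 // add0r G1 // (addrC a 1) h1a //.
- rewrite addrAC addxx2 // add0r Gg // add0r (addrC a g) hga //.
Qed.

Lemma gp_0_1 {F n c g} (HH : Hyp F n c g) (a : F) :
  a != 0 -> a != 1 -> a != g + 1 -> 1 + a != 0 -> g + a != 0 -> a + 1 != 0 -> a + g != 0 ->
  ((a)^-1 + c) = (((1 + a))^-1 + (c / g)) -> False.
Proof.
pre HH => a0 a1 ag1 n1a nga na1 nag E.
have P : (((1 * (a ^+ 2)) + (1 * a)) + (g / (c * (g + 1)))) = ((((a * (1 + a)) * g) / (c * (g + 1))) * (((a)^-1 + c) - (((1 + a))^-1 + (c / g)))).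
  { have -> : (((1 * (a ^+ 2)) + (1 * a)) + (g / (c * (g + 1)))) = ((((a * (1 + a)) * g) / (c * (g + 1))) * (((a)^-1 + c) - (((1 + a))^-1 + (c / g)))) + (1 + 1) * ((a ^+ 2 * c * g + 2%:R * a ^+ 3 * c * g + a ^+ 4 * c * g) / (c * (g + 1) * a * (1 + a) * g)) by field; nzt.
    by rewrite two mul0r addr0. }
have Q : (g / (c * (g + 1))) = ((1 * (g / (c * (g + 1)))) / (1 ^+ 2)) by field; nzt.
apply: (@quad_contra F two n (g / (c * (g + 1))) 1 1 (g / (c * (g + 1))) a hq _ _ Q (t1 HH)).
- by nzp.
- by rewrite P E subrr mulr0.
Qed.

Lemma gp_0_g {F n c g} (HH : Hyp F n c g) (a : F) :
  a != 0 -> a != 1 -> a != g + 1 -> 1 + a != 0 -> g + a != 0 -> a + 1 != 0 -> a + g != 0 ->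
  ((a)^-1 + c) = ((g + a))^-1 -> False.
Proof.
pre HH => a0 a1 ag1 n1a nga na1 nag E.
have P : (((1 * (a ^+ 2)) + (g * a)) + (g / c)) = (((a * (g + a)) / c) * (((a)^-1 + c) - ((g + a))^-1)) by field; nzt.
have Q : ((c)^-1 * (g)^-1) = ((1 * (g / c)) / (g ^+ 2)) by field; nzt.
apply: (@quad_contra F two n ((c)^-1 * (g)^-1) 1 g (g / c) a hq _ _ Q (t2 HH)).
- by nzp.
- by rewrite P E subrr mulr0.
Qed.

Lemma gp_0_a1 {F n c g} (HH : Hyp F n c g) (a : F) :
  a != 0 -> a != 1 -> a != g + 1 -> 1 + a != 0 -> g + a != 0 -> a + 1 != 0 -> a + g != 0 ->
  ((a)^-1 + c) = ((g)^-1 + (c / (a + 1))) -> False.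
Proof.
pre HH => a0 a1 ag1 n1a nga na1 nag E.
have P : (((((c * g) + 1) * (a ^+ 2)) + ((g + 1) * a)) + g) = (((g * a) * (a + 1)) * (((a)^-1 + c) - ((g)^-1 + (c / (a + 1))))).
  { have -> : (((((c * g) + 1) * (a ^+ 2)) + ((g + 1) * a)) + g) = (((g * a) * (a + 1)) * (((a)^-1 + c) - ((g)^-1 + (c / (a + 1))))) + (1 + 1) * ((a ^+ 2 * g + 2%:R * a ^+ 3 * g + a ^+ 4 * g) / (a * g * (a + 1))) by field; nzt.
    by rewrite two mul0r addr0. }
have Q : ((g * ((c * g) + 1)) / ((g + 1) ^+ 2)) = ((((c * g) + 1) * g) / ((g + 1) ^+ 2)) by field; nzt.
apply: (@quad_contra F two n ((g * ((c * g) + 1)) / ((g + 1) ^+ 2)) ((c * g) + 1) (g + 1) g a hq _ _ Q (t3 HH)).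
- by nzp.
- by rewrite P E subrr mulr0.
Qed.

Lemma gp_0_ag {F n c g} (HH : Hyp F n c g) (a : F) :
  a != 0 -> a != 1 -> a != g + 1 -> 1 + a != 0 -> g + a != 0 -> a + 1 != 0 -> a + g != 0 ->
  ((a)^-1 + c) = (c / (a + g)) -> False.
Proof.
pre HH => a0 a1 ag1 n1a nga na1 nag E.
have P : (((c * (a ^+ 2)) + ((((c * g) + c) + 1) * a)) + g) = ((a * (a + g)) * (((a)^-1 + c) - (c / (a + g)))).
  { have -> : (((c * (a ^+ 2)) + ((((c * g) + c) + 1) * a)) + g) = ((a * (a + g)) * (((a)^-1 + c) - (c / (a + g)))) + (1 + 1) * ((a ^+ 2 * c * g + a ^+ 3 * c) / (a * (a + g))) by field; nzt.
    by rewrite two mul0r addr0. }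
have Q : ((c * g) / ((((c * g) + c) + 1) ^+ 2)) = ((c * g) / ((((c * g) + c) + 1) ^+ 2)) by field; nzt.
apply: (@quad_contra F two n ((c * g) / ((((c * g) + c) + 1) ^+ 2)) c (((c * g) + c) + 1) g a hq _ _ Q (t4 HH)).
- by nzp.
- by rewrite P E subrr mulr0.
Qed.

Lemma gp_1_g {F n c g} (HH : Hyp F n c g) (a : F) :
  a != 0 -> a != 1 -> a != g + 1 -> 1 + a != 0 -> g + a != 0 -> a + 1 != 0 -> a + g != 0 ->
  (((1 + a))^-1 + (c / g)) = ((g + a))^-1 -> False.
Proof.
pre HH => a0 a1 ag1 n1a nga na1 nag E.
have P : (((c * (a ^+ 2)) + ((c * (g + 1)) * a)) + (((c * g) + (g ^+ 2)) + g)) = (((g * (1 + a)) * (g + a)) * ((((1 + a))^-1 + (c / g)) - ((g + a))^-1)).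
  { have -> : (((c * (a ^+ 2)) + ((c * (g + 1)) * a)) + (((c * g) + (g ^+ 2)) + g)) = (((g * (1 + a)) * (g + a)) * ((((1 + a))^-1 + (c / g)) - ((g + a))^-1)) + (1 + 1) * ((g ^+ 3 + a * g ^+ 2 + a * g ^+ 3 + a ^+ 2 * g ^+ 2) / ((1 + a) * g * (g + a))) by field; nzt.
    by rewrite two mul0r addr0. }
have Q : ((g * ((c + g) + 1)) / (c * ((g + 1) ^+ 2))) = ((c * (((c * g) + (g ^+ 2)) + g)) / ((c * (g + 1)) ^+ 2)) by field; nzt.
apply: (@quad_contra F two n ((g * ((c + g) + 1)) / (c * ((g + 1) ^+ 2))) c (c * (g + 1)) (((c * g) + (g ^+ 2)) + g) a hq _ _ Q (t5 HH)).
- by nzp.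
- by rewrite P E subrr mulr0.
Qed.

Lemma gp_1_a {F n c g} (HH : Hyp F n c g) (a : F) :
  a != 0 -> a != 1 -> a != g + 1 -> 1 + a != 0 -> g + a != 0 -> a + 1 != 0 -> a + g != 0 ->
  (((1 + a))^-1 + (c / g)) = (1 + (c / a)) -> False.
Proof.
pre HH => a0 a1 ag1 n1a nga na1 nag E.
have P : ((((c + g) * (a ^+ 2)) + ((c * (g + 1)) * a)) + (c * g)) = (((g * a) * (1 + a)) * ((((1 + a))^-1 + (c / g)) - (1 + (c / a)))).
  { have -> : ((((c + g) * (a ^+ 2)) + ((c * (g + 1)) * a)) + (c * g)) = (((g * a) * (1 + a)) * ((((1 + a))^-1 + (c / g)) - (1 + (c / a)))) + (1 + 1) * ((a * c * g ^+ 2 + 2%:R * a ^+ 2 * c * g ^+ 2 + a ^+ 3 * g ^+ 2 + a ^+ 3 * c * g ^+ 2 + a ^+ 4 * g ^+ 2) / ((1 + a) * g * a)) by field; nzt.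
    by rewrite two mul0r addr0. }
have Q : ((g * (c + g)) / (c * ((g + 1) ^+ 2))) = (((c + g) * (c * g)) / ((c * (g + 1)) ^+ 2)) by field; nzt.
apply: (@quad_contra F two n ((g * (c + g)) / (c * ((g + 1) ^+ 2))) (c + g) (c * (g + 1)) (c * g) a hq _ _ Q (t6 HH)).
- by nzp.
- by rewrite P E subrr mulr0.
Qed.

Lemma gp_1_ag {F n c g} (HH : Hyp F n c g) (a : F) :
  a != 0 -> a != 1 -> a != g + 1 -> 1 + a != 0 -> g + a != 0 -> a + 1 != 0 -> a + g != 0 ->
  (((1 + a))^-1 + (c / g)) = (c / (a + g)) -> False.
Proof.
pre HH => a0 a1 ag1 n1a nga na1 nag E.
have P : (((c * (a ^+ 2)) + ((c + g) * a)) + (g ^+ 2)) = (((g * (1 + a)) * (a + g)) * ((((1 + a))^-1 + (c / g)) - (c / (a + g)))) by field; nzt.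
have Q : ((c * (g ^+ 2)) / ((c + g) ^+ 2)) = ((c * (g ^+ 2)) / ((c + g) ^+ 2)) by field; nzt.
apply: (@quad_contra F two n ((c * (g ^+ 2)) / ((c + g) ^+ 2)) c (c + g) (g ^+ 2) a hq _ _ Q (t7 HH)).
- by nzp.
- by rewrite P E subrr mulr0.
Qed.

Lemma gp_g_a {F n c g} (HH : Hyp F n c g) (a : F) :
  a != 0 -> a != 1 -> a != g + 1 -> 1 + a != 0 -> g + a != 0 -> a + 1 != 0 -> a + g != 0 ->
  ((g + a))^-1 = (1 + (c / a)) -> False.
Proof.
pre HH => a0 a1 ag1 n1a nga na1 nag E.
have P : (((1 * (a ^+ 2)) + (((c + g) + 1) * a)) + (c * g)) = ((a * (g + a)) * (((g + a))^-1 - (1 + (c / a)))).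
  { have -> : (((1 * (a ^+ 2)) + (((c + g) + 1) * a)) + (c * g)) = ((a * (g + a)) * (((g + a))^-1 - (1 + (c / a)))) + (1 + 1) * ((a * c * g ^+ 2 + a ^+ 2 * g ^+ 2 + 2%:R * a ^+ 2 * c * g + 2%:R * a ^+ 3 * g + a ^+ 3 * c + a ^+ 4) / ((g + a) * a)) by field; nzt.
    by rewrite two mul0r addr0. }
have Q : ((c * g) / (((c + g) + 1) ^+ 2)) = ((1 * (c * g)) / (((c + g) + 1) ^+ 2)) by field; nzt.
apply: (@quad_contra F two n ((c * g) / (((c + g) + 1) ^+ 2)) 1 ((c + g) + 1) (c * g) a hq _ _ Q (t8 HH)).
- by nzp.
- by rewrite P E subrr mulr0.
Qed.

Lemma gp_g_a1 {F n c g} (HH : Hyp F n c g) (a : F) :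
  a != 0 -> a != 1 -> a != g + 1 -> 1 + a != 0 -> g + a != 0 -> a + 1 != 0 -> a + g != 0 ->
  ((g + a))^-1 = ((g)^-1 + (c / (a + 1))) -> False.
Proof.
pre HH => a0 a1 ag1 n1a nga na1 nag E.
have P : (((1 * (a ^+ 2)) + (((c * g) + 1) * a)) + (c * (g ^+ 2))) = (((g * (g + a)) * (a + 1)) * (((g + a))^-1 - ((g)^-1 + (c / (a + 1))))).
  { have -> : (((1 * (a ^+ 2)) + (((c * g) + 1) * a)) + (c * (g ^+ 2))) = (((g * (g + a)) * (a + 1)) * (((g + a))^-1 - ((g)^-1 + (c / (a + 1))))) + (1 + 1) * ((c * g ^+ 4 + a * g ^+ 2 + 2%:R * a * c * g ^+ 3 + a * c * g ^+ 4 + a ^+ 2 * g + 2%:R * a ^+ 2 * g ^+ 2 + a ^+ 2 * c * g ^+ 2 + 2%:R * a ^+ 2 * c * g ^+ 3 + 2%:R * a ^+ 3 * g + a ^+ 3 * g ^+ 2 + a ^+ 3 * c * g ^+ 2 + a ^+ 4 * g) / ((g + a) * g * (a + 1))) by field; nzt.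
    by rewrite two mul0r addr0. }
have Q : ((c * (g ^+ 2)) / (((c * g) + 1) ^+ 2)) = ((1 * (c * (g ^+ 2))) / (((c * g) + 1) ^+ 2)) by field; nzt.
apply: (@quad_contra F two n ((c * (g ^+ 2)) / (((c * g) + 1) ^+ 2)) 1 ((c * g) + 1) (c * (g ^+ 2)) a hq _ _ Q (t9 HH)).
- by nzp.
- by rewrite P E subrr mulr0.
Qed.

Lemma gp_a_a1 {F n c g} (HH : Hyp F n c g) (a : F) :
  a != 0 -> a != 1 -> a != g + 1 -> 1 + a != 0 -> g + a != 0 -> a + 1 != 0 -> a + g != 0 ->
  (1 + (c / a)) = ((g)^-1 + (c / (a + 1))) -> False.
Proof.
pre HH => a0 a1 ag1 n1a nga na1 nag E.
have P : (((1 * (a ^+ 2)) + (1 * a)) + ((c * g) / (g + 1))) = ((((g * a) * (a + 1)) / (g + 1)) * ((1 + (c / a)) - ((g)^-1 + (c / (a + 1))))).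
  { have -> : (((1 * (a ^+ 2)) + (1 * a)) + ((c * g) / (g + 1))) = ((((g * a) * (a + 1)) / (g + 1)) * ((1 + (c / a)) - ((g)^-1 + (c / (a + 1))))) + (1 + 1) * ((a ^+ 2 * g + 2%:R * a ^+ 3 * g + a ^+ 4 * g) / ((g + 1) * a * g * (a + 1))) by field; nzt.
    by rewrite two mul0r addr0. }
have Q : ((c * g) / (g + 1)) = ((1 * ((c * g) / (g + 1))) / (1 ^+ 2)) by field; nzt.
apply: (@quad_contra F two n ((c * g) / (g + 1)) 1 1 ((c * g) / (g + 1)) a hq _ _ Q (t10 HH)).
- by nzp.
- by rewrite P E subrr mulr0.
Qed.

Lemma gp_a_ag {F n c g} (HH : Hyp F n c g) (a : F) :
  a != 0 -> a != 1 -> a != g + 1 -> 1 + a != 0 -> g + a != 0 -> a + 1 != 0 -> a + g != 0 ->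
  (1 + (c / a)) = (c / (a + g)) -> False.
Proof.
pre HH => a0 a1 ag1 n1a nga na1 nag E.
have P : (((1 * (a ^+ 2)) + (g * a)) + (c * g)) = ((a * (a + g)) * ((1 + (c / a)) - (c / (a + g)))) by field; nzt.
have Q : (c * (g)^-1) = ((1 * (c * g)) / (g ^+ 2)) by field; nzt.
apply: (@quad_contra F two n (c * (g)^-1) 1 g (c * g) a hq _ _ Q (t11 HH)).
- by nzp.
- by rewrite P E subrr mulr0.
Qed.

Lemma gp_a1_ag {F n c g} (HH : Hyp F n c g) (a : F) :
  a != 0 -> a != 1 -> a != g + 1 -> 1 + a != 0 -> g + a != 0 -> a + 1 != 0 -> a + g != 0 ->
  ((g)^-1 + (c / (a + 1))) = (c / (a + g)) -> False.
Proof.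
pre HH => a0 a1 ag1 n1a nga na1 nag E.
have P : (((1 * (a ^+ 2)) + ((g + 1) * a)) + ((g + (c * (g ^+ 2))) + (c * g))) = (((g * (a + 1)) * (a + g)) * (((g)^-1 + (c / (a + 1))) - (c / (a + g)))).
  { have -> : (((1 * (a ^+ 2)) + ((g + 1) * a)) + ((g + (c * (g ^+ 2))) + (c * g))) = (((g * (a + 1)) * (a + g)) * (((g)^-1 + (c / (a + 1))) - (c / (a + g)))) + (1 + 1) * ((c * g ^+ 3 + a * c * g ^+ 2 + a * c * g ^+ 3 + a ^+ 2 * c * g ^+ 2) / (g * (a + 1) * (a + g))) by field; nzt.
    by rewrite two mul0r addr0. }
have Q : (((((c * g) + c) + 1) * g) / ((g + 1) ^+ 2)) = ((1 * ((g + (c * (g ^+ 2))) + (c * g))) / ((g + 1) ^+ 2)) by field; nzt.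
apply: (@quad_contra F two n (((((c * g) + c) + 1) * g) / ((g + 1) ^+ 2)) 1 (g + 1) ((g + (c * (g ^+ 2))) + (c * g)) a hq _ _ Q (t12 HH)).
- by nzp.
- by rewrite P E subrr mulr0.
Qed.

Lemma gp_0_a {F n c g} (HH : Hyp F n c g) (a : F) :
  a != 0 -> a != 1 -> a != g + 1 -> 1 + a != 0 -> g + a != 0 -> a + 1 != 0 -> a + g != 0 ->
  ((a)^-1 + c) = (1 + (c / a)) -> False.
Proof.
pre HH => a0 a1 ag1 n1a nga na1 nag E.
have P : ((c - 1) * ((1 + a) / a)) = (((a)^-1 + c) - (1 + (c / a))).
  { have -> : ((c - 1) * ((1 + a) / a)) = (((a)^-1 + c) - (1 + (c / a))) + (1 + 1) * ((- (1%:R) + c) / (a)) by field; nzt.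
    by rewrite two mul0r addr0. }
apply: (@lin_contra _ _ _ _ _ _ _ _ P E).
- by nzp.
- by [].
Qed.

Lemma gp_1_a1 {F n c g} (HH : Hyp F n c g) (a : F) :
  a != 0 -> a != 1 -> a != g + 1 -> 1 + a != 0 -> g + a != 0 -> a + 1 != 0 -> a + g != 0 ->
  (((1 + a))^-1 + (c / g)) = ((g)^-1 + (c / (a + 1))) -> False.
Proof.
pre HH => a0 a1 ag1 n1a nga na1 nag E.
have P : ((a - (g + 1)) * ((1 + c) / (g * (1 + a)))) = ((((1 + a))^-1 + (c / g)) - ((g)^-1 + (c / (a + 1)))).
  { have -> : ((a - (g + 1)) * ((1 + c) / (g * (1 + a)))) = ((((1 + a))^-1 + (c / g)) - ((g)^-1 + (c / (a + 1)))) + (1 + 1) * ((- (g) - c + a - a * g - a * c + a ^+ 2) / (g * (1 + a) * (a + 1))) by field; nzt.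
    by rewrite two mul0r addr0. }
apply: (@lin_contra _ _ _ _ _ _ _ _ P E).
- by nzp.
- by [].
Qed.

Lemma gp_g_ag {F n c g} (HH : Hyp F n c g) (a : F) :
  a != 0 -> a != 1 -> a != g + 1 -> 1 + a != 0 -> g + a != 0 -> a + 1 != 0 -> a + g != 0 ->
  ((g + a))^-1 = (c / (a + g)) -> False.
Proof.
pre HH => a0 a1 ag1 n1a nga na1 nag E.
have P : ((c - 1) * ((a + g))^-1) = (((g + a))^-1 - (c / (a + g))).
  { have -> : ((c - 1) * ((a + g))^-1) = (((g + a))^-1 - (c / (a + g))) + (1 + 1) * ((- (g) + c * g - a + a * c) / ((a + g) * (g + a))) by field; nzt.
    by rewrite two mul0r addr0. }
apply: (@lin_contra _ _ _ _ _ _ _ _ P E).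
- by nzp.
- by [].
Qed.

Lemma three_roots (F : fieldType) (b C K x1 x2 x3 : F) : K != 0 ->
  x1 != x2 -> x2 != x3 -> x3 != x1 ->
  b * x1 ^+ 2 + C * x1 - K = 0 -> b * x2 ^+ 2 + C * x2 - K = 0 -> b * x3 ^+ 2 + C * x3 - K = 0 -> False.
Proof.
move=> K0 d12 d23 d31 Q1 Q2 Q3.
have e : forall u v, u != v -> b * u ^+ 2 + C * u - K = 0 -> b * v ^+ 2 + C * v - K = 0 ->
    b * (u + v) + C = 0.
  move=> u v uv Qu Qv.
  have : (u - v) * (b * (u + v) + C) = (b * u ^+ 2 + C * u - K) - (b * v ^+ 2 + C * v - K) by ring.
  by rewrite Qu Qv subrr => /eqP; rewrite mulf_eq0 subr_eq0 (negbTE uv) /= => /eqP.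
have e12 := e _ _ d12 Q1 Q2.
have d13 : x1 != x3 by rewrite eq_sym.
have e13 := e _ _ d13 Q1 Q3.
have : b * (x2 - x3) = (b * (x1 + x2) + C) - (b * (x1 + x3) + C) by ring.
rewrite e12 e13 subrr => /eqP; rewrite mulf_eq0 subr_eq0 (negbTE d23) orbF => /eqP b0.
move: e12 Q1; rewrite b0 !mul0r !add0r => ->; rewrite mul0r add0r => /eqP.
by rewrite oppr_eq0 (negbTE K0).
Qed.

Lemma gen_root {F n c g} (HH : Hyp F n c g) (a b x : F) : a != 0 ->
  x \notin [:: 0; 1; g; a; a + 1; a + g] -> Dv g c a x = b ->
  b * x ^+ 2 + (a * b - 1 - c) * x - c * a = 0.
Proof.
pre HH => a0; rewrite !inE !negb_or => /andP[x0 /andP[x1 /andP[xg /andP[xa /andP[xa1 xag]]]]] E.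
have two' := two.
have xa0 : x + a != 0 by rewrite add_eq0_2.
have hx : Fswap g x = x^-1 by rewrite Gx.
have hxa : Fswap g (x + a) = (x + a)^-1.
  rewrite Gx //; first by rewrite nL3 // addrC.
  by rewrite nL3 // addrC.
move: E; rewrite /Dv hx hxa => E.
have -> : b * x ^+ 2 + (a * b - 1 - c) * x - c * a = - (x * (x + a)) * ((x + a)^-1 + c * x^-1 - b).
  by field; nzt.
by rewrite E subrr mulr0.
Qed.

Lemma eqP_sym {T : eqType} {x y : T} : x != y -> y != x.
Proof. by rewrite eq_sym. Qed.
Lemma comb (T : eqType) (P : pred T) (Sol : T -> Prop) (x1 x2 x3 x4 : T) :
  uniq [:: x1; x2; x3; x4] -> Sol x1 -> Sol x2 -> Sol x3 -> Sol x4 ->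
  (forall x y z, uniq [:: x; y; z] -> Sol x -> Sol y -> Sol z -> ~~ P x -> ~~ P y -> ~~ P z -> False) ->
  (forall x y z, uniq [:: x; y; z] -> Sol x -> Sol y -> Sol z -> P x -> P y -> ~~ P z -> False) ->
  (forall x y z w, uniq [:: x; y; z; w] -> Sol x -> Sol y -> Sol z -> Sol w -> P x -> P y -> P z -> P w -> False) ->
  False.
Proof.
move=> U S1 S2 S3 S4 T1 T2 T4.
have U' := U.
move: U' => /= /and4P[U1 U2 U3 _]; move: U1 U2 U3; rewrite !inE !negb_or => /and3P[d12 d13 d14] /andP[d23 d24] d34.
have u3 : forall i j k : T, i != j -> j != k -> i != k -> uniq [:: i; j; k].
  by move=> i j k ij jk ik; rewrite /= !inE !negb_or ij ik jk.
case P1: (P x1); case P2: (P x2); case P3: (P x3); case P4: (P x4).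
- exact: (T4 x1 x2 x3 x4 U S1 S2 S3 S4 P1 P2 P3 P4).
- exact: (T2 x1 x2 x4 (u3 _ _ _ d12 d24 d14) S1 S2 S4 (P1 : P x1) (P2 : P x2) (negbT P4)).
- exact: (T2 x1 x2 x3 (u3 _ _ _ d12 d23 d13) S1 S2 S3 (P1 : P x1) (P2 : P x2) (negbT P3)).
- exact: (T2 x1 x2 x3 (u3 _ _ _ d12 d23 d13) S1 S2 S3 (P1 : P x1) (P2 : P x2) (negbT P3)).
- exact: (T2 x1 x3 x2 (u3 _ _ _ d13 (eqP_sym d23) d12) S1 S3 S2 (P1 : P x1) (P3 : P x3) (negbT P2)).
- exact: (T2 x1 x3 x2 (u3 _ _ _ d13 (eqP_sym d23) d12) S1 S3 S2 (P1 : P x1) (P3 : P x3) (negbT P2)).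
- exact: (T2 x1 x4 x2 (u3 _ _ _ d14 (eqP_sym d24) d12) S1 S4 S2 (P1 : P x1) (P4 : P x4) (negbT P2)).
- exact: (T1 x2 x3 x4 (u3 _ _ _ d23 d34 d24) S2 S3 S4 (negbT P2) (negbT P3) (negbT P4)).
- exact: (T2 x2 x3 x1 (u3 _ _ _ d23 (eqP_sym d13) (eqP_sym d12)) S2 S3 S1 (P2 : P x2) (P3 : P x3) (negbT P1)).
- exact: (T2 x2 x3 x1 (u3 _ _ _ d23 (eqP_sym d13) (eqP_sym d12)) S2 S3 S1 (P2 : P x2) (P3 : P x3) (negbT P1)).
- exact: (T2 x2 x4 x1 (u3 _ _ _ d24 (eqP_sym d14) (eqP_sym d12)) S2 S4 S1 (P2 : P x2) (P4 : P x4) (negbT P1)).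
- exact: (T1 x1 x3 x4 (u3 _ _ _ d13 d34 d14) S1 S3 S4 (negbT P1) (negbT P3) (negbT P4)).
- exact: (T2 x3 x4 x1 (u3 _ _ _ d34 (eqP_sym d14) (eqP_sym d13)) S3 S4 S1 (P3 : P x3) (P4 : P x4) (negbT P1)).
- exact: (T1 x1 x2 x4 (u3 _ _ _ d12 d24 d14) S1 S2 S4 (negbT P1) (negbT P2) (negbT P4)).
- exact: (T1 x1 x2 x3 (u3 _ _ _ d12 d23 d13) S1 S2 S3 (negbT P1) (negbT P2) (negbT P3)).
- exact: (T1 x1 x2 x3 (u3 _ _ _ d12 d23 d13) S1 S2 S3 (negbT P1) (negbT P2) (negbT P3)).
Qed.

Lemma pairbad {F n c g} (HH : Hyp F n c g) (a x y : F) : a != 0 -> a != 1 -> a != g -> a != g + 1 ->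
  x \in [:: 0; 1; g; a; a + 1; a + g] -> y \in [:: 0; 1; g; a; a + 1; a + g] -> x != y ->
  Dv g c a x = Dv g c a y -> False.
Proof.
move=> a0 a1 ag ag1.
have [V0 [V1 [Vg [Va [Va1 Vag]]]]] := gvals HH a a0 a1 ag ag1.
have two := two HH.
have n1a : 1 + a != 0 by rewrite add_eq0_2 // eq_sym.
have nga : g + a != 0 by rewrite add_eq0_2 // (eq_sym g).
have na1 : a + 1 != 0 by rewrite add_eq0_2.
have nag : a + g != 0 by rewrite add_eq0_2.
rewrite !inE => /orP[/eqP->|/orP[/eqP->|/orP[/eqP->|/orP[/eqP->|/orP[/eqP->|/eqP->]]]]] /orP[/eqP->|/orP[/eqP->|/orP[/eqP->|/orP[/eqP->|/orP[/eqP->|/eqP->]]]]] xy; rewrite ?V0 ?V1 ?Vg ?Va ?Va1 ?Vag => E.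
- by rewrite eqxx in xy.
- exact: (gp_0_1 HH a a0 a1 ag1 n1a nga na1 nag E).
- exact: (gp_0_g HH a a0 a1 ag1 n1a nga na1 nag E).
- exact: (gp_0_a HH a a0 a1 ag1 n1a nga na1 nag E).
- exact: (gp_0_a1 HH a a0 a1 ag1 n1a nga na1 nag E).
- exact: (gp_0_ag HH a a0 a1 ag1 n1a nga na1 nag E).
- exact: (gp_0_1 HH a a0 a1 ag1 n1a nga na1 nag (esym E)).
- by rewrite eqxx in xy.
- exact: (gp_1_g HH a a0 a1 ag1 n1a nga na1 nag E).
- exact: (gp_1_a HH a a0 a1 ag1 n1a nga na1 nag E).
- exact: (gp_1_a1 HH a a0 a1 ag1 n1a nga na1 nag E).
- exact: (gp_1_ag HH a a0 a1 ag1 n1a nga na1 nag E).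
- exact: (gp_0_g HH a a0 a1 ag1 n1a nga na1 nag (esym E)).
- exact: (gp_1_g HH a a0 a1 ag1 n1a nga na1 nag (esym E)).
- by rewrite eqxx in xy.
- exact: (gp_g_a HH a a0 a1 ag1 n1a nga na1 nag E).
- exact: (gp_g_a1 HH a a0 a1 ag1 n1a nga na1 nag E).
- exact: (gp_g_ag HH a a0 a1 ag1 n1a nga na1 nag E).
- exact: (gp_0_a HH a a0 a1 ag1 n1a nga na1 nag (esym E)).
- exact: (gp_1_a HH a a0 a1 ag1 n1a nga na1 nag (esym E)).
- exact: (gp_g_a HH a a0 a1 ag1 n1a nga na1 nag (esym E)).
- by rewrite eqxx in xy.
- exact: (gp_a_a1 HH a a0 a1 ag1 n1a nga na1 nag E).
- exact: (gp_a_ag HH a a0 a1 ag1 n1a nga na1 nag E).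
- exact: (gp_0_a1 HH a a0 a1 ag1 n1a nga na1 nag (esym E)).
- exact: (gp_1_a1 HH a a0 a1 ag1 n1a nga na1 nag (esym E)).
- exact: (gp_g_a1 HH a a0 a1 ag1 n1a nga na1 nag (esym E)).
- exact: (gp_a_a1 HH a a0 a1 ag1 n1a nga na1 nag (esym E)).
- by rewrite eqxx in xy.
- exact: (gp_a1_ag HH a a0 a1 ag1 n1a nga na1 nag E).
- exact: (gp_0_ag HH a a0 a1 ag1 n1a nga na1 nag (esym E)).
- exact: (gp_1_ag HH a a0 a1 ag1 n1a nga na1 nag (esym E)).
- exact: (gp_g_ag HH a a0 a1 ag1 n1a nga na1 nag (esym E)).
- exact: (gp_a_ag HH a a0 a1 ag1 n1a nga na1 nag (esym E)).
- exact: (gp_a1_ag HH a a0 a1 ag1 n1a nga na1 nag (esym E)).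
- by rewrite eqxx in xy.
Qed.

Lemma uniq3 (T : eqType) (x y z : T) : uniq [:: x; y; z] -> [/\ x != y, y != z & z != x].
Proof. by move=> u; split; apply/eqP => E; move: u; rewrite E /= !inE eqxx /= ?orbT ?andbF. Qed.

Lemma core_gen {F n c g} (HH : Hyp F n c g) (a b x1 x2 x3 x4 : F) :
  a != 0 -> a != 1 -> a != g -> a != g + 1 -> uniq [:: x1; x2; x3; x4] ->
  Dv g c a x1 = b -> Dv g c a x2 = b -> Dv g c a x3 = b -> Dv g c a x4 = b -> False.
Proof.
move=> a0 a1 ag ag1 U S1 S2 S3 S4.
apply: (@comb _ (fun x => x \in [:: 0; 1; g; a; a + 1; a + g]) (fun x => Dv g c a x = b) _ _ _ _ U S1 S2 S3 S4) => /=.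
- move=> x y z u Sx Sy Sz Px Py Pz; case/uniq3: u => dxy dyz dzx.
  have Q1 := gen_root HH _ _ _ a0 Px Sx. have Q2 := gen_root HH _ _ _ a0 Py Sy. have Q3 := gen_root HH _ _ _ a0 Pz Sz.
  apply: (@three_roots _ _ _ _ _ _ _ _ dxy dyz dzx Q1 Q2 Q3).
  by rewrite mulf_neq0 // (hc0 HH).
- move=> x y z u Sx Sy Sz Px Py _; case/uniq3: u => dxy _ _.
  exact: (pairbad HH _ _ _ a0 a1 ag ag1 Px Py dxy (etrans Sx (esym Sy))).
- move=> x y z w u Sx Sy _ _ Px Py _ _; move: u => /= /andP[]; rewrite !inE !negb_or => /andP[dxy _] _.
  exact: (pairbad HH _ _ _ a0 a1 ag ag1 Px Py dxy (etrans Sx (esym Sy))).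
Qed.

Lemma cover4 (T : eqType) (E s : seq T) e : uniq E -> uniq s -> size s = size E ->
  {subset s <= E} -> e \in E -> e \in s.
Proof.
move=> uE us sz sub eE; apply/negPn/negP => Hn.
have pos : (0 < size E)%N by rewrite lt0n size_eq0; apply/eqP => E0; rewrite E0 in eE.
have sub' : {subset s <= rem e E}.
  move=> v vs; rewrite (mem_rem_uniq _ uE) inE /= (sub _ vs) andbT.
  by apply/negP => /eqP ve; move: Hn; rewrite -ve vs.
have := uniq_leq_size us sub'; rewrite size_rem // sz.
by case: (size E) pos => // k _; rewrite /= ltnn.
Qed.

Lemma uniqE {F n c g} (HH : Hyp F n c g) : uniq [:: 0; 1; g; g + 1].
Proof.
pre HH.
have f1 : (0 == 1 :> F) = false by rewrite eq_sym oner_eq0.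
have f2 : (0 == g) = false by rewrite eq_sym (negbTE hg0).
have f3 : (0 == g + 1) = false by rewrite eq_sym (negbTE nz_g1).
have f4 : (1 == g) = false by rewrite eq_sym (negbTE hg1).
have f5 : (1 == g + 1) = false by apply/negbTE; rewrite eq_sym; apply: nL2'.
have f6 : (g == g + 1) = false by apply/negbTE; rewrite eq_sym; apply: nL2; exact: oner_neq0.
by rewrite /= !inE f1 f2 f3 f4 f5 f6.
Qed.

Lemma lin_solve (F : fieldType) (x y K L R : F) : K != 0 -> (x - y) * K = L - R -> L = R -> x = y.
Proof.
move=> K0 E LR; move: E; rewrite LR subrr => /eqP.
by rewrite mulf_eq0 (negbTE K0) orbF subr_eq0 => /eqP.
Qed.

Lemma Gg1 {F n c g} (HH : Hyp F n c g) : Fswap g (g + 1) = (g + 1)^-1.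
Proof.
pre HH; rewrite Gx //; first [exact: (@nL2' _ _ _ hg0) | exact: (@nL2 _ _ _ (oner_neq0 _))].
Qed.

Lemma svals1 {F n c g} (HH : Hyp F n c g) :
  Dv g c 1 0 = g^-1 + c /\ Dv g c 1 1 = 1 + c / g /\ Dv g c 1 g = (g + 1)^-1 /\ Dv g c 1 (g + 1) = c / (g + 1).
Proof.
have G := Gg1 HH; pre HH; rewrite /Dv.
split; first by rewrite add0r G1 // G0 // mulr1.
split; first by rewrite two G0 // G1.
split; first by rewrite G Gg // mulr0 addr0.
by rewrite -addrA two addr0 Gg // add0r G.
Qed.

Lemma svalsg {F n c g} (HH : Hyp F n c g) :
  Dv g c g 0 = c /\ Dv g c g 1 = (1 + g)^-1 + c / g /\ Dv g c g g = 1 /\ Dv g c g (g + 1) = g^-1 + c / (g + 1).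
Proof.
have G := Gg1 HH; pre HH; rewrite /Dv.
split; first by rewrite add0r Gg // add0r G0 // mulr1.
split; first by rewrite (addrC 1 g) G G1.
split; first by rewrite addxx2 // G0 // Gg // mulr0 addr0.
by rewrite addrAC addxx2 // add0r G1 // G.
Qed.

Lemma svalsg1 {F n c g} (HH : Hyp F n c g) :
  Dv g c (g + 1) 0 = (g + 1)^-1 + c /\ Dv g c (g + 1) 1 = c / g /\ Dv g c (g + 1) g = g^-1 /\ Dv g c (g + 1) (g + 1) = 1 + c / (g + 1).
Proof.
have G := Gg1 HH; pre HH; rewrite /Dv.
split; first by rewrite add0r G G0 // mulr1.
split; first by rewrite addrCA two addr0 Gg // add0r G1.
split; first by rewrite addrA addxx2 // add0r G1 // Gg // mulr0 addr0.
by rewrite addxx2 // G0 // G.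
Qed.

Lemma sp_1_0_g {F n c g} (HH : Hyp F n c g) (b z : F) :
  ((g)^-1 + c) = b -> ((g + 1))^-1 = b -> (((b * (z ^+ 2)) + ((((1 * b) - 1) - c) * z)) - (c * 1)) = 0 -> False.
Proof.
pre HH => E1 E2 Qz.
have P : ((c - ((g * (g + 1)))^-1) * 1) = (((g)^-1 + c) - ((g + 1))^-1).
  { have -> : ((c - ((g * (g + 1)))^-1) * 1) = (((g)^-1 + c) - ((g + 1))^-1) + (1 + 1) * ((- (1%:R)) / (g * (g + 1))) by field; nzt.
    by rewrite two mul0r ?addr0. }
have Ec : c = ((g * (g + 1)))^-1 by apply: (@lin_solve _ _ _ _ _ _ _ P (etrans E1 (esym E2))); nzp.
move: (t3 HH) => Ht.
rewrite Ec in Ht Qz; rewrite ?Ec in E1.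
rewrite -E1 in Qz.
apply: (@tr_contra1 F two n _ ((((((g)^-1 + ((g * (g + 1)))^-1) * z) / ((g + 1) / g)) + (g / ((g + 1) ^+ 2)))) hq Ht).
have I : ((g * ((((g * (g + 1)))^-1 * g) + 1)) / ((g + 1) ^+ 2)) = ((((((((g)^-1 + ((g * (g + 1)))^-1) * z) / ((g + 1) / g)) + (g / ((g + 1) ^+ 2))) ^+ 2) + (((((g)^-1 + ((g * (g + 1)))^-1) * z) / ((g + 1) / g)) + (g / ((g + 1) ^+ 2)))) + ((((g)^-1 + ((g * (g + 1)))^-1) / (((g + 1) / g) ^+ 2)) * (((((g)^-1 + ((g * (g + 1)))^-1) * (z ^+ 2)) + ((((1 * ((g)^-1 + ((g * (g + 1)))^-1)) - 1) - ((g * (g + 1)))^-1) * z)) - (((g * (g + 1)))^-1 * 1)))).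
  { have -> : ((g * ((((g * (g + 1)))^-1 * g) + 1)) / ((g + 1) ^+ 2)) = ((((((((g)^-1 + ((g * (g + 1)))^-1) * z) / ((g + 1) / g)) + (g / ((g + 1) ^+ 2))) ^+ 2) + (((((g)^-1 + ((g * (g + 1)))^-1) * z) / ((g + 1) / g)) + (g / ((g + 1) ^+ 2)))) + ((((g)^-1 + ((g * (g + 1)))^-1) / (((g + 1) / g) ^+ 2)) * (((((g)^-1 + ((g * (g + 1)))^-1) * (z ^+ 2)) + ((((1 * ((g)^-1 + ((g * (g + 1)))^-1)) - 1) - ((g * (g + 1)))^-1) * z)) - (((g * (g + 1)))^-1 * 1)))) + (1 + 1) * ((g ^+ 2 - 2%:R * g ^+ 2 * z - 4%:R * g ^+ 2 * z ^+ 2 + g ^+ 3 - 5%:R * g ^+ 3 * z - 4%:R * g ^+ 3 * z ^+ 2 - 2%:R * g ^+ 4 * z - g ^+ 4 * z ^+ 2) / (g ^+ 2 * (g + 1) ^+ 4)) by field; nzt.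
    by rewrite two mul0r ?addr0. }
by rewrite I Qz mulr0 addr0.
Qed.

Lemma sp_1_0_g1 {F n c g} (HH : Hyp F n c g) (b z : F) :
  ((g)^-1 + c) = b -> (c / (g + 1)) = b -> (((b * (z ^+ 2)) + ((((1 * b) - 1) - c) * z)) - (c * 1)) = 0 -> False.
Proof.
pre HH => E1 E2 Qz.
have P : ((c - ((g + 1) / (g ^+ 2))) * (g / (g + 1))) = (((g)^-1 + c) - (c / (g + 1))).
  { have -> : ((c - ((g + 1) / (g ^+ 2))) * (g / (g + 1))) = (((g)^-1 + c) - (c / (g + 1))) + (1 + 1) * ((- (g) - g ^+ 2) / (g ^+ 2 * (g + 1))) by field; nzt.
    by rewrite two mul0r ?addr0. }
have Ec : c = ((g + 1) / (g ^+ 2)) by apply: (@lin_solve _ _ _ _ _ _ _ P (etrans E1 (esym E2))); nzp.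
move: (t3 HH) => Ht.
rewrite Ec in Ht Qz; rewrite ?Ec in E1.
rewrite -E1 in Qz.
apply: (@tr_contra1 F two n _ ((((((g)^-1 + ((g + 1) / (g ^+ 2))) * z) / ((g + 1) / g)) + ((g * (g + 1)))^-1)) hq Ht).
have I : ((g * ((((g + 1) / (g ^+ 2)) * g) + 1)) / ((g + 1) ^+ 2)) = ((((((((g)^-1 + ((g + 1) / (g ^+ 2))) * z) / ((g + 1) / g)) + ((g * (g + 1)))^-1) ^+ 2) + (((((g)^-1 + ((g + 1) / (g ^+ 2))) * z) / ((g + 1) / g)) + ((g * (g + 1)))^-1)) + ((((g)^-1 + ((g + 1) / (g ^+ 2))) / (((g + 1) / g) ^+ 2)) * (((((g)^-1 + ((g + 1) / (g ^+ 2))) * (z ^+ 2)) + ((((1 * ((g)^-1 + ((g + 1) / (g ^+ 2)))) - 1) - ((g + 1) / (g ^+ 2))) * z)) - (((g + 1) / (g ^+ 2)) * 1)))).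
  { have -> : ((g * ((((g + 1) / (g ^+ 2)) * g) + 1)) / ((g + 1) ^+ 2)) = ((((((((g)^-1 + ((g + 1) / (g ^+ 2))) * z) / ((g + 1) / g)) + ((g * (g + 1)))^-1) ^+ 2) + (((((g)^-1 + ((g + 1) / (g ^+ 2))) * z) / ((g + 1) / g)) + ((g * (g + 1)))^-1)) + ((((g)^-1 + ((g + 1) / (g ^+ 2))) / (((g + 1) / g) ^+ 2)) * (((((g)^-1 + ((g + 1) / (g ^+ 2))) * (z ^+ 2)) + ((((1 * ((g)^-1 + ((g + 1) / (g ^+ 2)))) - 1) - ((g + 1) / (g ^+ 2))) * z)) - (((g + 1) / (g ^+ 2)) * 1)))) + (1 + 1) * ((- (g ^+ 2 * z) - g ^+ 2 * z ^+ 2 + g ^+ 3 - 3%:R * g ^+ 3 * z - 4%:R * g ^+ 3 * z ^+ 2 + g ^+ 4 - 2%:R * g ^+ 4 * z - 4%:R * g ^+ 4 * z ^+ 2 + g ^+ 5) / (g ^+ 4 * (g + 1) ^+ 2)) by field; nzt.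
    by rewrite two mul0r ?addr0. }
by rewrite I Qz mulr0 addr0.
Qed.

Lemma sp_1_1_g {F n c g} (HH : Hyp F n c g) (b z : F) :
  (1 + (c / g)) = b -> ((g + 1))^-1 = b -> (((b * (z ^+ 2)) + ((((1 * b) - 1) - c) * z)) - (c * 1)) = 0 -> False.
Proof.
pre HH => E1 E2 Qz.
have P : ((c - ((g ^+ 2) / (g + 1))) * (g)^-1) = ((1 + (c / g)) - ((g + 1))^-1).
  { have -> : ((c - ((g ^+ 2) / (g + 1))) * (g)^-1) = ((1 + (c / g)) - ((g + 1))^-1) + (1 + 1) * ((- (g ^+ 2)) / ((g + 1) * g)) by field; nzt.
    by rewrite two mul0r ?addr0. }
have Ec : c = ((g ^+ 2) / (g + 1)) by apply: (@lin_solve _ _ _ _ _ _ _ P (etrans E1 (esym E2))); nzp.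
move: (t6 HH) => Ht.
rewrite Ec in Ht Qz; rewrite ?Ec in E1.
rewrite -E1 in Qz.
apply: (@tr_contra1 F two n _ ((((1 + (((g ^+ 2) / (g + 1)) / g)) * z) / g)) hq Ht).
have I : ((g * (((g ^+ 2) / (g + 1)) + g)) / (((g ^+ 2) / (g + 1)) * ((g + 1) ^+ 2))) = ((((((1 + (((g ^+ 2) / (g + 1)) / g)) * z) / g) ^+ 2) + (((1 + (((g ^+ 2) / (g + 1)) / g)) * z) / g)) + (((1 + (((g ^+ 2) / (g + 1)) / g)) / (g ^+ 2)) * ((((1 + (((g ^+ 2) / (g + 1)) / g)) * (z ^+ 2)) + ((((1 * (1 + (((g ^+ 2) / (g + 1)) / g))) - 1) - ((g ^+ 2) / (g + 1))) * z)) - (((g ^+ 2) / (g + 1)) * 1)))).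
  { have -> : ((g * (((g ^+ 2) / (g + 1)) + g)) / (((g ^+ 2) / (g + 1)) * ((g + 1) ^+ 2))) = ((((((1 + (((g ^+ 2) / (g + 1)) / g)) * z) / g) ^+ 2) + (((1 + (((g ^+ 2) / (g + 1)) / g)) * z) / g)) + (((1 + (((g ^+ 2) / (g + 1)) / g)) / (g ^+ 2)) * ((((1 + (((g ^+ 2) / (g + 1)) / g)) * (z ^+ 2)) + ((((1 * (1 + (((g ^+ 2) / (g + 1)) / g))) - 1) - ((g ^+ 2) / (g + 1))) * z)) - (((g ^+ 2) / (g + 1)) * 1)))) + (1 + 1) * ((- (g ^+ 2 * z ^+ 2) - g ^+ 3 * z - 5%:R * g ^+ 3 * z ^+ 2 + g ^+ 4 - 3%:R * g ^+ 4 * z - 8%:R * g ^+ 4 * z ^+ 2 + 3%:R * g ^+ 5 - 2%:R * g ^+ 5 * z - 4%:R * g ^+ 5 * z ^+ 2 + 2%:R * g ^+ 6) / ((g + 1) ^+ 3 * g ^+ 4)) by field; nzt.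
    by rewrite two mul0r ?addr0. }
by rewrite I Qz mulr0 addr0.
Qed.

Lemma sp_1_1_g1 {F n c g} (HH : Hyp F n c g) (b z : F) :
  (1 + (c / g)) = b -> (c / (g + 1)) = b -> (((b * (z ^+ 2)) + ((((1 * b) - 1) - c) * z)) - (c * 1)) = 0 -> False.
Proof.
pre HH => E1 E2 Qz.
have P : ((c - (g * (g + 1))) * ((g * (g + 1)))^-1) = ((1 + (c / g)) - (c / (g + 1))).
  { have -> : ((c - (g * (g + 1))) * ((g * (g + 1)))^-1) = ((1 + (c / g)) - (c / (g + 1))) + (1 + 1) * ((- (g) - g ^+ 2) / (g * (g + 1))) by field; nzt.
    by rewrite two mul0r ?addr0. }
have Ec : c = (g * (g + 1)) by apply: (@lin_solve _ _ _ _ _ _ _ P (etrans E1 (esym E2))); nzp.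
move: (t6 HH) => Ht.
rewrite Ec in Ht Qz; rewrite ?Ec in E1.
rewrite -E1 in Qz.
apply: (@tr_contra1 F two n _ ((((1 + ((g * (g + 1)) / g)) * z) / ((g + 1) ^+ 2))) hq Ht).
have I : ((g * ((g * (g + 1)) + g)) / ((g * (g + 1)) * ((g + 1) ^+ 2))) = ((((((1 + ((g * (g + 1)) / g)) * z) / ((g + 1) ^+ 2)) ^+ 2) + (((1 + ((g * (g + 1)) / g)) * z) / ((g + 1) ^+ 2))) + (((1 + ((g * (g + 1)) / g)) / (((g + 1) ^+ 2) ^+ 2)) * ((((1 + ((g * (g + 1)) / g)) * (z ^+ 2)) + ((((1 * (1 + ((g * (g + 1)) / g))) - 1) - (g * (g + 1))) * z)) - ((g * (g + 1)) * 1)))).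
  { have -> : ((g * ((g * (g + 1)) + g)) / ((g * (g + 1)) * ((g + 1) ^+ 2))) = ((((((1 + ((g * (g + 1)) / g)) * z) / ((g + 1) ^+ 2)) ^+ 2) + (((1 + ((g * (g + 1)) / g)) * z) / ((g + 1) ^+ 2))) + (((1 + ((g * (g + 1)) / g)) / (((g + 1) ^+ 2) ^+ 2)) * ((((1 + ((g * (g + 1)) / g)) * (z ^+ 2)) + ((((1 * (1 + ((g * (g + 1)) / g))) - 1) - (g * (g + 1))) * z)) - ((g * (g + 1)) * 1)))) + (1 + 1) * ((- (2%:R * g ^+ 2 * z) - 4%:R * g ^+ 2 * z ^+ 2 + 2%:R * g ^+ 3 - 3%:R * g ^+ 3 * z - 4%:R * g ^+ 3 * z ^+ 2 + 3%:R * g ^+ 4 - g ^+ 4 * z - g ^+ 4 * z ^+ 2 + g ^+ 5) / (g ^+ 2 * (g + 1) ^+ 4)) by field; nzt.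
    by rewrite two mul0r ?addr0. }
by rewrite I Qz mulr0 addr0.
Qed.

Lemma sp_g_0_1 {F n c g} (HH : Hyp F n c g) (b z : F) :
  c = b -> (((1 + g))^-1 + (c / g)) = b -> (((b * (z ^+ 2)) + ((((g * b) - 1) - c) * z)) - (c * g)) = 0 -> False.
Proof.
pre HH => E1 E2 Qz.
have P : ((c - (g / ((g + 1) ^+ 2))) * ((g + 1) / g)) = (c - (((1 + g))^-1 + (c / g))).
  { have -> : ((c - (g / ((g + 1) ^+ 2))) * ((g + 1) / g)) = (c - (((1 + g))^-1 + (c / g))) + (1 + 1) * ((c + 3%:R * c * g + 3%:R * c * g ^+ 2 + c * g ^+ 3) / ((g + 1) ^+ 2 * g * (1 + g))) by field; nzt.
    by rewrite two mul0r ?addr0. }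
have Ec : c = (g / ((g + 1) ^+ 2)) by apply: (@lin_solve _ _ _ _ _ _ _ P (etrans E1 (esym E2))); nzp.
move: (t6 HH) => Ht.
rewrite Ec in Ht Qz; rewrite ?Ec in E1.
rewrite -E1 in Qz.
apply: (@tr_contra1 F two n _ ((((g / ((g + 1) ^+ 2)) * z) / ((g + 1))^-1)) hq Ht).
have I : ((g * ((g / ((g + 1) ^+ 2)) + g)) / ((g / ((g + 1) ^+ 2)) * ((g + 1) ^+ 2))) = ((((((g / ((g + 1) ^+ 2)) * z) / ((g + 1))^-1) ^+ 2) + (((g / ((g + 1) ^+ 2)) * z) / ((g + 1))^-1)) + (((g / ((g + 1) ^+ 2)) / (((g + 1))^-1 ^+ 2)) * ((((g / ((g + 1) ^+ 2)) * (z ^+ 2)) + ((((g * (g / ((g + 1) ^+ 2))) - 1) - (g / ((g + 1) ^+ 2))) * z)) - ((g / ((g + 1) ^+ 2)) * g)))).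
  { have -> : ((g * ((g / ((g + 1) ^+ 2)) + g)) / ((g / ((g + 1) ^+ 2)) * ((g + 1) ^+ 2))) = ((((((g / ((g + 1) ^+ 2)) * z) / ((g + 1))^-1) ^+ 2) + (((g / ((g + 1) ^+ 2)) * z) / ((g + 1))^-1)) + (((g / ((g + 1) ^+ 2)) / (((g + 1))^-1 ^+ 2)) * ((((g / ((g + 1) ^+ 2)) * (z ^+ 2)) + ((((g * (g / ((g + 1) ^+ 2))) - 1) - (g / ((g + 1) ^+ 2))) * z)) - ((g / ((g + 1) ^+ 2)) * g)))) + (1 + 1) * ((g ^+ 2 + 3%:R * g ^+ 3 + g ^+ 3 * z - g ^+ 3 * z ^+ 2 + 4%:R * g ^+ 4 + 2%:R * g ^+ 4 * z - 2%:R * g ^+ 4 * z ^+ 2 + 3%:R * g ^+ 5 + g ^+ 5 * z - g ^+ 5 * z ^+ 2 + g ^+ 6) / ((g + 1) ^+ 4 * g)) by field; nzt.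
    by rewrite two mul0r ?addr0. }
by rewrite I Qz mulr0 addr0.
Qed.

Lemma sp_g_0_g1 {F n c g} (HH : Hyp F n c g) (b z : F) :
  c = b -> ((g)^-1 + (c / (g + 1))) = b -> (((b * (z ^+ 2)) + ((((g * b) - 1) - c) * z)) - (c * g)) = 0 -> False.
Proof.
pre HH => E1 E2 Qz.
have P : ((c - ((g + 1) / (g ^+ 2))) * (g / (g + 1))) = (c - ((g)^-1 + (c / (g + 1)))) by field; nzt.
have Ec : c = ((g + 1) / (g ^+ 2)) by apply: (@lin_solve _ _ _ _ _ _ _ P (etrans E1 (esym E2))); nzp.
move: (t9 HH) => Ht.
rewrite Ec in Ht Qz; rewrite ?Ec in E1.
have S : ((((g + 1) / (g ^+ 2)) * g) + 1) = (g)^-1.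
  { have -> : ((((g + 1) / (g ^+ 2)) * g) + 1) = (g)^-1 + (1 + 1) * ((g ^+ 2) / (g ^+ 2)) by field; nzt.
    by rewrite two mul0r ?addr0. }
rewrite S in Ht.
rewrite -E1 in Qz.
apply: (@tr_contra1 F two n _ ((((((g + 1) / (g ^+ 2)) * z) / ((g ^+ 2))^-1) + g)) hq Ht).
have I : ((((g + 1) / (g ^+ 2)) * (g ^+ 2)) / ((g)^-1 ^+ 2)) = ((((((((g + 1) / (g ^+ 2)) * z) / ((g ^+ 2))^-1) + g) ^+ 2) + (((((g + 1) / (g ^+ 2)) * z) / ((g ^+ 2))^-1) + g)) + ((((g + 1) / (g ^+ 2)) / (((g ^+ 2))^-1 ^+ 2)) * (((((g + 1) / (g ^+ 2)) * (z ^+ 2)) + ((((g * ((g + 1) / (g ^+ 2))) - 1) - ((g + 1) / (g ^+ 2))) * z)) - (((g + 1) / (g ^+ 2)) * g)))).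
  { have -> : ((((g + 1) / (g ^+ 2)) * (g ^+ 2)) / ((g)^-1 ^+ 2)) = ((((((((g + 1) / (g ^+ 2)) * z) / ((g ^+ 2))^-1) + g) ^+ 2) + (((((g + 1) / (g ^+ 2)) * z) / ((g ^+ 2))^-1) + g)) + ((((g + 1) / (g ^+ 2)) / (((g ^+ 2))^-1 ^+ 2)) * (((((g + 1) / (g ^+ 2)) * (z ^+ 2)) + ((((g * ((g + 1) / (g ^+ 2))) - 1) - ((g + 1) / (g ^+ 2))) * z)) - (((g + 1) / (g ^+ 2)) * g)))) + (1 + 1) * ((- (g ^+ 4 * z ^+ 2) - g ^+ 5 * z - 2%:R * g ^+ 5 * z ^+ 2 + g ^+ 6 - g ^+ 6 * z - g ^+ 6 * z ^+ 2 + g ^+ 7) / (g ^+ 4)) by field; nzt.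
    by rewrite two mul0r ?addr0. }
by rewrite I Qz mulr0 addr0.
Qed.

Lemma sp_g_1_g {F n c g} (HH : Hyp F n c g) (b z : F) :
  (((1 + g))^-1 + (c / g)) = b -> 1 = b -> (((b * (z ^+ 2)) + ((((g * b) - 1) - c) * z)) - (c * g)) = 0 -> False.
Proof.
pre HH => E1 E2 Qz.
have P : ((c - ((g ^+ 2) / (g + 1))) * (g)^-1) = ((((1 + g))^-1 + (c / g)) - 1) by field; nzt.
have Ec : c = ((g ^+ 2) / (g + 1)) by apply: (@lin_solve _ _ _ _ _ _ _ P (etrans E1 (esym E2))); nzp.
move: (t7 HH) => Ht.
rewrite Ec in Ht Qz; rewrite ?Ec in E1.
have S : (((g ^+ 2) / (g + 1)) + g) = (g / (g + 1)).
  { have -> : (((g ^+ 2) / (g + 1)) + g) = (g / (g + 1)) + (1 + 1) * ((g ^+ 2) / ((g + 1))) by field; nzt.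
    by rewrite two mul0r ?addr0. }
rewrite S in Ht.
rewrite -E1 in Qz.
apply: (@tr_contra1 F two n _ (((((((1 + g))^-1 + (((g ^+ 2) / (g + 1)) / g)) * z) / ((g + 1))^-1) + (g ^+ 2))) hq Ht).
have I : ((((g ^+ 2) / (g + 1)) * (g ^+ 2)) / ((g / (g + 1)) ^+ 2)) = (((((((((1 + g))^-1 + (((g ^+ 2) / (g + 1)) / g)) * z) / ((g + 1))^-1) + (g ^+ 2)) ^+ 2) + ((((((1 + g))^-1 + (((g ^+ 2) / (g + 1)) / g)) * z) / ((g + 1))^-1) + (g ^+ 2))) + (((((1 + g))^-1 + (((g ^+ 2) / (g + 1)) / g)) / (((g + 1))^-1 ^+ 2)) * ((((((1 + g))^-1 + (((g ^+ 2) / (g + 1)) / g)) * (z ^+ 2)) + ((((g * (((1 + g))^-1 + (((g ^+ 2) / (g + 1)) / g))) - 1) - ((g ^+ 2) / (g + 1))) * z)) - (((g ^+ 2) / (g + 1)) * g)))).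
  { have -> : ((((g ^+ 2) / (g + 1)) * (g ^+ 2)) / ((g / (g + 1)) ^+ 2)) = (((((((((1 + g))^-1 + (((g ^+ 2) / (g + 1)) / g)) * z) / ((g + 1))^-1) + (g ^+ 2)) ^+ 2) + ((((((1 + g))^-1 + (((g ^+ 2) / (g + 1)) / g)) * z) / ((g + 1))^-1) + (g ^+ 2))) + (((((1 + g))^-1 + (((g ^+ 2) / (g + 1)) / g)) / (((g + 1))^-1 ^+ 2)) * ((((((1 + g))^-1 + (((g ^+ 2) / (g + 1)) / g)) * (z ^+ 2)) + ((((g * (((1 + g))^-1 + (((g ^+ 2) / (g + 1)) / g))) - 1) - ((g ^+ 2) / (g + 1))) * z)) - (((g ^+ 2) / (g + 1)) * g)))) + (1 + 1) * ((- (g ^+ 2 * z ^+ 2) - 6%:R * g ^+ 3 * z ^+ 2 - g ^+ 4 * z - 15%:R * g ^+ 4 * z ^+ 2 + g ^+ 5 - 5%:R * g ^+ 5 * z - 20%:R * g ^+ 5 * z ^+ 2 + 4%:R * g ^+ 6 - 10%:R * g ^+ 6 * z - 15%:R * g ^+ 6 * z ^+ 2 + 6%:R * g ^+ 7 - 10%:R * g ^+ 7 * z - 6%:R * g ^+ 7 * z ^+ 2 + 4%:R * g ^+ 8 - 5%:R * g ^+ 8 * z - g ^+ 8 * z ^+ 2 + g ^+ 9 - g ^+ 9 * z) / ((g + 1) ^+ 2 * g ^+ 2 * (1 + g) ^+ 2)) by field; nzt.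
    by rewrite two mul0r ?addr0. }
by rewrite I Qz mulr0 addr0.
Qed.

Lemma sp_g_g_g1 {F n c g} (HH : Hyp F n c g) (b z : F) :
  1 = b -> ((g)^-1 + (c / (g + 1))) = b -> (((b * (z ^+ 2)) + ((((g * b) - 1) - c) * z)) - (c * g)) = 0 -> False.
Proof.
pre HH => E1 E2 Qz.
have P : ((c - (((g + 1) ^+ 2) / g)) * ((g + 1))^-1) = (1 - ((g)^-1 + (c / (g + 1)))).
  { have -> : ((c - (((g + 1) ^+ 2) / g)) * ((g + 1))^-1) = (1 - ((g)^-1 + (c / (g + 1)))) + (1 + 1) * ((- (g) - g ^+ 2 + c * g) / (g * (g + 1))) by field; nzt.
    by rewrite two mul0r ?addr0. }
have Ec : c = (((g + 1) ^+ 2) / g) by apply: (@lin_solve _ _ _ _ _ _ _ P (etrans E1 (esym E2))); nzp.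
move: (t3 HH) => Ht.
rewrite Ec in Ht Qz; rewrite ?Ec in E1.
rewrite -E1 in Qz.
apply: (@tr_contra1 F two n _ ((((1 * z) / ((g + 1) / g)) + ((g ^+ 2) / (g + 1)))) hq Ht).
have I : ((g * (((((g + 1) ^+ 2) / g) * g) + 1)) / ((g + 1) ^+ 2)) = ((((((1 * z) / ((g + 1) / g)) + ((g ^+ 2) / (g + 1))) ^+ 2) + (((1 * z) / ((g + 1) / g)) + ((g ^+ 2) / (g + 1)))) + ((1 / (((g + 1) / g) ^+ 2)) * (((1 * (z ^+ 2)) + ((((g * 1) - 1) - (((g + 1) ^+ 2) / g)) * z)) - ((((g + 1) ^+ 2) / g) * g)))).
  { have -> : ((g * (((((g + 1) ^+ 2) / g) * g) + 1)) / ((g + 1) ^+ 2)) = ((((((1 * z) / ((g + 1) / g)) + ((g ^+ 2) / (g + 1))) ^+ 2) + (((1 * z) / ((g + 1) / g)) + ((g ^+ 2) / (g + 1)))) + ((1 / (((g + 1) / g) ^+ 2)) * (((1 * (z ^+ 2)) + ((((g * 1) - 1) - (((g + 1) ^+ 2) / g)) * z)) - ((((g + 1) ^+ 2) / g) * g)))) + (1 + 1) * ((g ^+ 2 + g ^+ 3 + g ^+ 3 * z - g ^+ 3 * z ^+ 2 + g ^+ 4 - g ^+ 4 * z) / (g * (g + 1) ^+ 2)) by field; nzt.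
    by rewrite two mul0r ?addr0. }
by rewrite I Qz mulr0 addr0.
Qed.

Lemma sp_g1_0_1 {F n c g} (HH : Hyp F n c g) (b z : F) :
  (((g + 1))^-1 + c) = b -> (c / g) = b -> (((b * (z ^+ 2)) + (((((g + 1) * b) - 1) - c) * z)) - (c * (g + 1))) = 0 -> False.
Proof.
pre HH => E1 E2 Qz.
have P : ((c - (g / ((g + 1) ^+ 2))) * ((g + 1) / g)) = ((((g + 1))^-1 + c) - (c / g)).
  { have -> : ((c - (g / ((g + 1) ^+ 2))) * ((g + 1) / g)) = ((((g + 1))^-1 + c) - (c / g)) + (1 + 1) * ((- (g) - g ^+ 2 + c + 2%:R * c * g + c * g ^+ 2) / ((g + 1) ^+ 2 * g)) by field; nzt.
    by rewrite two mul0r ?addr0. }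
have Ec : c = (g / ((g + 1) ^+ 2)) by apply: (@lin_solve _ _ _ _ _ _ _ P (etrans E1 (esym E2))); nzp.
move: (t7 HH) => Ht.
rewrite Ec in Ht Qz; rewrite ?Ec in E1.
have S : ((g / ((g + 1) ^+ 2)) + g) = ((g ^+ 3) / ((g + 1) ^+ 2)).
  { have -> : ((g / ((g + 1) ^+ 2)) + g) = ((g ^+ 3) / ((g + 1) ^+ 2)) + (1 + 1) * ((g + g ^+ 2) / ((g + 1) ^+ 2)) by field; nzt.
    by rewrite two mul0r ?addr0. }
rewrite S in Ht.
rewrite -E1 in Qz.
apply: (@tr_contra1 F two n _ (((((((g + 1))^-1 + (g / ((g + 1) ^+ 2))) * z) / ((g ^+ 2) / ((g + 1) ^+ 2))) + (g)^-1)) hq Ht).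
have I : (((g / ((g + 1) ^+ 2)) * (g ^+ 2)) / (((g ^+ 3) / ((g + 1) ^+ 2)) ^+ 2)) = (((((((((g + 1))^-1 + (g / ((g + 1) ^+ 2))) * z) / ((g ^+ 2) / ((g + 1) ^+ 2))) + (g)^-1) ^+ 2) + ((((((g + 1))^-1 + (g / ((g + 1) ^+ 2))) * z) / ((g ^+ 2) / ((g + 1) ^+ 2))) + (g)^-1)) + (((((g + 1))^-1 + (g / ((g + 1) ^+ 2))) / (((g ^+ 2) / ((g + 1) ^+ 2)) ^+ 2)) * ((((((g + 1))^-1 + (g / ((g + 1) ^+ 2))) * (z ^+ 2)) + (((((g + 1) * (((g + 1))^-1 + (g / ((g + 1) ^+ 2)))) - 1) - (g / ((g + 1) ^+ 2))) * z)) - ((g / ((g + 1) ^+ 2)) * (g + 1))))).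
  { have -> : (((g / ((g + 1) ^+ 2)) * (g ^+ 2)) / (((g ^+ 3) / ((g + 1) ^+ 2)) ^+ 2)) = (((((((((g + 1))^-1 + (g / ((g + 1) ^+ 2))) * z) / ((g ^+ 2) / ((g + 1) ^+ 2))) + (g)^-1) ^+ 2) + ((((((g + 1))^-1 + (g / ((g + 1) ^+ 2))) * z) / ((g ^+ 2) / ((g + 1) ^+ 2))) + (g)^-1)) + (((((g + 1))^-1 + (g / ((g + 1) ^+ 2))) / (((g ^+ 2) / ((g + 1) ^+ 2)) ^+ 2)) * ((((((g + 1))^-1 + (g / ((g + 1) ^+ 2))) * (z ^+ 2)) + (((((g + 1) * (((g + 1))^-1 + (g / ((g + 1) ^+ 2)))) - 1) - (g / ((g + 1) ^+ 2))) * z)) - ((g / ((g + 1) ^+ 2)) * (g + 1))))) + (1 + 1) * ((- (g ^+ 2 * z ^+ 2) + g ^+ 3 - g ^+ 3 * z - 8%:R * g ^+ 3 * z ^+ 2 + 6%:R * g ^+ 4 - 7%:R * g ^+ 4 * z - 26%:R * g ^+ 4 * z ^+ 2 + 15%:R * g ^+ 5 - 20%:R * g ^+ 5 * z - 44%:R * g ^+ 5 * z ^+ 2 + 20%:R * g ^+ 6 - 30%:R * g ^+ 6 * z - 41%:R * g ^+ 6 * z ^+ 2 + 15%:R * g ^+ 7 - 25%:R * g ^+ 7 * z - 20%:R * g ^+ 7 * z ^+ 2 + 6%:R * g ^+ 8 - 11%:R * g ^+ 8 * z - 4%:R * g ^+ 8 * z ^+ 2 + g ^+ 9 - 2%:R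 * g ^+ 9 * z) / ((g + 1) ^+ 4 * g ^+ 6)) by field; nzt.
    by rewrite two mul0r ?addr0. }
by rewrite I Qz mulr0 addr0.
Qed.

Lemma sp_g1_0_g {F n c g} (HH : Hyp F n c g) (b z : F) :
  (((g + 1))^-1 + c) = b -> (g)^-1 = b -> (((b * (z ^+ 2)) + (((((g + 1) * b) - 1) - c) * z)) - (c * (g + 1))) = 0 -> False.
Proof.
pre HH => E1 E2 Qz.
have P : ((c - ((g * (g + 1)))^-1) * 1) = ((((g + 1))^-1 + c) - (g)^-1) by field; nzt.
have Ec : c = ((g * (g + 1)))^-1 by apply: (@lin_solve _ _ _ _ _ _ _ P (etrans E1 (esym E2))); nzp.
move: (t9 HH) => Ht.
rewrite Ec in Ht Qz; rewrite ?Ec in E1.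
have S : ((((g * (g + 1)))^-1 * g) + 1) = (g / (g + 1)).
  { have -> : ((((g * (g + 1)))^-1 * g) + 1) = (g / (g + 1)) + (1 + 1) * ((g) / (g * (g + 1))) by field; nzt.
    by rewrite two mul0r ?addr0. }
rewrite S in Ht.
rewrite -E1 in Qz.
apply: (@tr_contra1 F two n _ (((((((g + 1))^-1 + ((g * (g + 1)))^-1) * z) / ((g + 1))^-1) + (g)^-1)) hq Ht).
have I : ((((g * (g + 1)))^-1 * (g ^+ 2)) / ((g / (g + 1)) ^+ 2)) = (((((((((g + 1))^-1 + ((g * (g + 1)))^-1) * z) / ((g + 1))^-1) + (g)^-1) ^+ 2) + ((((((g + 1))^-1 + ((g * (g + 1)))^-1) * z) / ((g + 1))^-1) + (g)^-1)) + (((((g + 1))^-1 + ((g * (g + 1)))^-1) / (((g + 1))^-1 ^+ 2)) * ((((((g + 1))^-1 + ((g * (g + 1)))^-1) * (z ^+ 2)) + (((((g + 1) * (((g + 1))^-1 + ((g * (g + 1)))^-1)) - 1) - ((g * (g + 1)))^-1) * z)) - (((g * (g + 1)))^-1 * (g + 1))))).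
  { have -> : ((((g * (g + 1)))^-1 * (g ^+ 2)) / ((g / (g + 1)) ^+ 2)) = (((((((((g + 1))^-1 + ((g * (g + 1)))^-1) * z) / ((g + 1))^-1) + (g)^-1) ^+ 2) + ((((((g + 1))^-1 + ((g * (g + 1)))^-1) * z) / ((g + 1))^-1) + (g)^-1)) + (((((g + 1))^-1 + ((g * (g + 1)))^-1) / (((g + 1))^-1 ^+ 2)) * ((((((g + 1))^-1 + ((g * (g + 1)))^-1) * (z ^+ 2)) + (((((g + 1) * (((g + 1))^-1 + ((g * (g + 1)))^-1)) - 1) - ((g * (g + 1)))^-1) * z)) - (((g * (g + 1)))^-1 * (g + 1))))) + (1 + 1) * ((- (g * z) - g * z ^+ 2 + g ^+ 2 - 4%:R * g ^+ 2 * z - 4%:R * g ^+ 2 * z ^+ 2 + 3%:R * g ^+ 3 - 6%:R * g ^+ 3 * z - 6%:R * g ^+ 3 * z ^+ 2 + 3%:R * g ^+ 4 - 4%:R * g ^+ 4 * z - 4%:R * g ^+ 4 * z ^+ 2 + g ^+ 5 - g ^+ 5 * z - g ^+ 5 * z ^+ 2) / (g ^+ 3 * (g + 1) ^+ 2)) by field; nzt.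
    by rewrite two mul0r ?addr0. }
by rewrite I Qz mulr0 addr0.
Qed.

Lemma sp_g1_1_g1 {F n c g} (HH : Hyp F n c g) (b z : F) :
  (c / g) = b -> (1 + (c / (g + 1))) = b -> (((b * (z ^+ 2)) + (((((g + 1) * b) - 1) - c) * z)) - (c * (g + 1))) = 0 -> False.
Proof.
pre HH => E1 E2 Qz.
have P : ((c - (g * (g + 1))) * ((g * (g + 1)))^-1) = ((c / g) - (1 + (c / (g + 1)))) by field; nzt.
have Ec : c = (g * (g + 1)) by apply: (@lin_solve _ _ _ _ _ _ _ P (etrans E1 (esym E2))); nzp.
move: (t7 HH) => Ht.
rewrite Ec in Ht Qz; rewrite ?Ec in E1.
have S : ((g * (g + 1)) + g) = (g ^+ 2).
  { have -> : ((g * (g + 1)) + g) = (g ^+ 2) + (1 + 1) * ((g) / (1)) by field; nzt.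
    by rewrite two mul0r ?addr0. }
rewrite S in Ht.
rewrite -E1 in Qz.
apply: (@tr_contra1 F two n _ ((((((g * (g + 1)) / g) * z) / g) + g)) hq Ht).
have I : (((g * (g + 1)) * (g ^+ 2)) / ((g ^+ 2) ^+ 2)) = ((((((((g * (g + 1)) / g) * z) / g) + g) ^+ 2) + (((((g * (g + 1)) / g) * z) / g) + g)) + ((((g * (g + 1)) / g) / (g ^+ 2)) * (((((g * (g + 1)) / g) * (z ^+ 2)) + (((((g + 1) * ((g * (g + 1)) / g)) - 1) - (g * (g + 1))) * z)) - ((g * (g + 1)) * (g + 1))))).
  { have -> : (((g * (g + 1)) * (g ^+ 2)) / ((g ^+ 2) ^+ 2)) = ((((((((g * (g + 1)) / g) * z) / g) + g) ^+ 2) + (((((g * (g + 1)) / g) * z) / g) + g)) + ((((g * (g + 1)) / g) / (g ^+ 2)) * (((((g * (g + 1)) / g) * (z ^+ 2)) + (((((g + 1) * ((g * (g + 1)) / g)) - 1) - (g * (g + 1))) * z)) - ((g * (g + 1)) * (g + 1))))) + (1 + 1) * ((- (g ^+ 2 * z ^+ 2) + g ^+ 3 - g ^+ 3 * z - 2%:R * g ^+ 3 * z ^+ 2 + 2%:R * g ^+ 4 - 2%:R * g ^+ 4 * z - g ^+ 4 * z ^+ 2 + g ^+ 5 - g ^+ 5 * z) / (g ^+ 4)) by field; nzt.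
    by rewrite two mul0r ?addr0. }
by rewrite I Qz mulr0 addr0.
Qed.

Lemma sp_g1_g_g1 {F n c g} (HH : Hyp F n c g) (b z : F) :
  (g)^-1 = b -> (1 + (c / (g + 1))) = b -> (((b * (z ^+ 2)) + (((((g + 1) * b) - 1) - c) * z)) - (c * (g + 1))) = 0 -> False.
Proof.
pre HH => E1 E2 Qz.
have P : ((c - (((g + 1) ^+ 2) / g)) * ((g + 1))^-1) = ((g)^-1 - (1 + (c / (g + 1)))).
  { have -> : ((c - (((g + 1) ^+ 2) / g)) * ((g + 1))^-1) = ((g)^-1 - (1 + (c / (g + 1)))) + (1 + 1) * ((- (1%:R) - g + c * g) / (g * (g + 1))) by field; nzt.
    by rewrite two mul0r ?addr0. }
have Ec : c = (((g + 1) ^+ 2) / g) by apply: (@lin_solve _ _ _ _ _ _ _ P (etrans E1 (esym E2))); nzp.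
move: (t9 HH) => Ht.
rewrite Ec in Ht Qz; rewrite ?Ec in E1.
have S : (((((g + 1) ^+ 2) / g) * g) + 1) = (g ^+ 2).
  { have -> : (((((g + 1) ^+ 2) / g) * g) + 1) = (g ^+ 2) + (1 + 1) * ((g + g ^+ 2) / (g)) by field; nzt.
    by rewrite two mul0r ?addr0. }
rewrite S in Ht.
rewrite -E1 in Qz.
apply: (@tr_contra1 F two n _ (((((g)^-1 * z) / g) + ((g ^+ 2))^-1)) hq Ht).
have I : (((((g + 1) ^+ 2) / g) * (g ^+ 2)) / ((g ^+ 2) ^+ 2)) = (((((((g)^-1 * z) / g) + ((g ^+ 2))^-1) ^+ 2) + ((((g)^-1 * z) / g) + ((g ^+ 2))^-1)) + (((g)^-1 / (g ^+ 2)) * ((((g)^-1 * (z ^+ 2)) + (((((g + 1) * (g)^-1) - 1) - (((g + 1) ^+ 2) / g)) * z)) - ((((g + 1) ^+ 2) / g) * (g + 1))))).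
  { have -> : (((((g + 1) ^+ 2) / g) * (g ^+ 2)) / ((g ^+ 2) ^+ 2)) = (((((((g)^-1 * z) / g) + ((g ^+ 2))^-1) ^+ 2) + ((((g)^-1 * z) / g) + ((g ^+ 2))^-1)) + (((g)^-1 / (g ^+ 2)) * ((((g)^-1 * (z ^+ 2)) + (((((g + 1) * (g)^-1) - 1) - (((g + 1) ^+ 2) / g)) * z)) - ((((g + 1) ^+ 2) / g) * (g + 1))))) + (1 + 1) * ((- (g * z) - g * z ^+ 2 + 2%:R * g ^+ 2 + g ^+ 2 * z + 2%:R * g ^+ 3 + g ^+ 4) / (g ^+ 5)) by field; nzt.
    by rewrite two mul0r ?addr0. }
by rewrite I Qz mulr0 addr0.
Qed.

Lemma sp_1_0_1 {F n c g} (HH : Hyp F n c g) (b : F) :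
  ((g)^-1 + c) = b -> (1 + (c / g)) = b -> False.
Proof.
pre HH => E1 E2.
have P : ((c - 1) * ((g + 1) / g)) = (((g)^-1 + c) - (1 + (c / g))).
  { have -> : ((c - 1) * ((g + 1) / g)) = (((g)^-1 + c) - (1 + (c / g))) + (1 + 1) * ((- (1%:R) + c) / (g)) by field; nzt.
    by rewrite two mul0r ?addr0. }
apply: (@lin_contra _ _ _ _ _ _ _ _ P (etrans E1 (esym E2))).
- by nzp.
- by [].
Qed.

Lemma sp_1_g_g1 {F n c g} (HH : Hyp F n c g) (b : F) :
  ((g + 1))^-1 = b -> (c / (g + 1)) = b -> False.
Proof.
pre HH => E1 E2.
have P : ((c - 1) * ((g + 1))^-1) = (((g + 1))^-1 - (c / (g + 1))).
  { have -> : ((c - 1) * ((g + 1))^-1) = (((g + 1))^-1 - (c / (g + 1))) + (1 + 1) * ((- (1%:R) + c) / ((g + 1))) by field; nzt.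
    by rewrite two mul0r ?addr0. }
apply: (@lin_contra _ _ _ _ _ _ _ _ P (etrans E1 (esym E2))).
- by nzp.
- by [].
Qed.

Lemma sp_g_0_g {F n c g} (HH : Hyp F n c g) (b : F) :
  c = b -> 1 = b -> False.
Proof.
pre HH => E1 E2.
have P : ((c - 1) * 1) = (c - 1) by field; nzt.
apply: (@lin_contra _ _ _ _ _ _ _ _ P (etrans E1 (esym E2))).
- by nzp.
- by [].
Qed.

Lemma sp_g_1_g1 {F n c g} (HH : Hyp F n c g) (b : F) :
  (((1 + g))^-1 + (c / g)) = b -> ((g)^-1 + (c / (g + 1))) = b -> False.
Proof.
pre HH => E1 E2.
have P : ((c - 1) * ((g * (g + 1)))^-1) = ((((1 + g))^-1 + (c / g)) - ((g)^-1 + (c / (g + 1)))) by field; nzt.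
apply: (@lin_contra _ _ _ _ _ _ _ _ P (etrans E1 (esym E2))).
- by nzp.
- by [].
Qed.

Lemma sp_g1_0_g1 {F n c g} (HH : Hyp F n c g) (b : F) :
  (((g + 1))^-1 + c) = b -> (1 + (c / (g + 1))) = b -> False.
Proof.
pre HH => E1 E2.
have P : ((c - 1) * (g / (g + 1))) = ((((g + 1))^-1 + c) - (1 + (c / (g + 1)))) by field; nzt.
apply: (@lin_contra _ _ _ _ _ _ _ _ P (etrans E1 (esym E2))).
- by nzp.
- by [].
Qed.

Lemma sp_g1_1_g {F n c g} (HH : Hyp F n c g) (b : F) :
  (c / g) = b -> (g)^-1 = b -> False.
Proof.
pre HH => E1 E2.
have P : ((c - 1) * (g)^-1) = ((c / g) - (g)^-1) by field; nzt.
apply: (@lin_contra _ _ _ _ _ _ _ _ P (etrans E1 (esym E2))).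
- by nzp.
- by [].
Qed.

Lemma core_sp_1 {F n c g} (HH : Hyp F n c g) (b x1 x2 x3 x4 : F) : uniq [:: x1; x2; x3; x4] ->
  Dv g c 1 x1 = b -> Dv g c 1 x2 = b -> Dv g c 1 x3 = b -> Dv g c 1 x4 = b -> False.
Proof.
move=> U S1 S2 S3 S4.
have [V0 [V1 [Vg Vg1]]] := svals1 HH.
have conv : forall x : F, x \notin [:: 0; 1; g; g + 1] -> x \notin [:: 0; 1; g; 1; 1 + 1; 1 + g].
  move=> x; rewrite (two HH) (addrC 1 g); rewrite !inE.
  by case: (x == 0); case: (x == 1); case: (x == g); case: (x == g + 1).
apply: (@comb _ (fun x => x \in [:: 0; 1; g; g + 1]) (fun x => Dv g c 1 x = b) _ _ _ _ U S1 S2 S3 S4) => /=.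
- move=> x y z u Sx Sy Sz Px Py Pz; case/uniq3: u => dxy dyz dzx.
  have Q1 := gen_root HH _ _ _ (oner_neq0 _) (conv _ Px) Sx.
  have Q2 := gen_root HH _ _ _ (oner_neq0 _) (conv _ Py) Sy.
  have Q3 := gen_root HH _ _ _ (oner_neq0 _) (conv _ Pz) Sz.
  apply: (@three_roots _ _ _ _ _ _ _ _ dxy dyz dzx Q1 Q2 Q3).
  by rewrite mulf_neq0 // ?(hc0 HH) // (oner_neq0 _).
- move=> x y z u Sx Sy Sz Px Py Pz; case/uniq3: u => dxy _ _.
  have Qz := gen_root HH _ _ _ (oner_neq0 _) (conv _ Pz) Sz.
  move: Px Py dxy Sx Sy; rewrite !inE => /or4P[]/eqP-> /or4P[]/eqP-> dxy; rewrite ?V0 ?V1 ?Vg ?Vg1 => Sx Sy.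
  + by rewrite eqxx in dxy.
  + exact: (sp_1_0_1 HH _ Sx Sy).
  + exact: (sp_1_0_g HH _ _ Sx Sy Qz).
  + exact: (sp_1_0_g1 HH _ _ Sx Sy Qz).
  + exact: (sp_1_0_1 HH _ Sy Sx).
  + by rewrite eqxx in dxy.
  + exact: (sp_1_1_g HH _ _ Sx Sy Qz).
  + exact: (sp_1_1_g1 HH _ _ Sx Sy Qz).
  + exact: (sp_1_0_g HH _ _ Sy Sx Qz).
  + exact: (sp_1_1_g HH _ _ Sy Sx Qz).
  + by rewrite eqxx in dxy.
  + exact: (sp_1_g_g1 HH _ Sx Sy).
  + exact: (sp_1_0_g1 HH _ _ Sy Sx Qz).
  + exact: (sp_1_1_g1 HH _ _ Sy Sx Qz).
  + exact: (sp_1_g_g1 HH _ Sy Sx).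
  + by rewrite eqxx in dxy.
- move=> x y z w u Sx Sy Sz Sw Px Py Pz Pw.
  have sub : {subset [:: x; y; z; w] <= [:: 0; 1; g; g + 1]}.
    by move=> v Hv; move: Hv Px Py Pz Pw; rewrite !inE => /or4P[]/eqP-> *.
  have mem := fun e : F => @cover4 _ _ _ e (uniqE HH) (u : uniq [:: x; y; z; w]) (erefl _) sub.
  have solv : forall v : F, v \in [:: x; y; z; w] -> Dv g c 1 v = b.
    by move=> v; rewrite !inE => /or4P[]/eqP->.
  have Si := solv 0 (mem 0 ltac:(by rewrite !inE eqxx ?orbT)).
  have Sj := solv 1 (mem 1 ltac:(by rewrite !inE eqxx ?orbT)).
  rewrite ?V0 ?V1 ?Vg ?Vg1 in Si Sj.
  exact: (sp_1_0_1 HH _ Si Sj).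
Qed.

Lemma core_sp_g {F n c g} (HH : Hyp F n c g) (b x1 x2 x3 x4 : F) : uniq [:: x1; x2; x3; x4] ->
  Dv g c g x1 = b -> Dv g c g x2 = b -> Dv g c g x3 = b -> Dv g c g x4 = b -> False.
Proof.
move=> U S1 S2 S3 S4.
have [V0 [V1 [Vg Vg1]]] := svalsg HH.
have conv : forall x : F, x \notin [:: 0; 1; g; g + 1] -> x \notin [:: 0; 1; g; g; g + 1; g + g].
  move=> x; rewrite (@addxx2 _ (two HH) g); rewrite !inE.
  by case: (x == 0); case: (x == 1); case: (x == g); case: (x == g + 1).
apply: (@comb _ (fun x => x \in [:: 0; 1; g; g + 1]) (fun x => Dv g c g x = b) _ _ _ _ U S1 S2 S3 S4) => /=.
- move=> x y z u Sx Sy Sz Px Py Pz; case/uniq3: u => dxy dyz dzx.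
  have Q1 := gen_root HH _ _ _ (hg0 HH) (conv _ Px) Sx.
  have Q2 := gen_root HH _ _ _ (hg0 HH) (conv _ Py) Sy.
  have Q3 := gen_root HH _ _ _ (hg0 HH) (conv _ Pz) Sz.
  apply: (@three_roots _ _ _ _ _ _ _ _ dxy dyz dzx Q1 Q2 Q3).
  by rewrite mulf_neq0 // ?(hc0 HH) // (hg0 HH).
- move=> x y z u Sx Sy Sz Px Py Pz; case/uniq3: u => dxy _ _.
  have Qz := gen_root HH _ _ _ (hg0 HH) (conv _ Pz) Sz.
  move: Px Py dxy Sx Sy; rewrite !inE => /or4P[]/eqP-> /or4P[]/eqP-> dxy; rewrite ?V0 ?V1 ?Vg ?Vg1 => Sx Sy.
  + by rewrite eqxx in dxy.
  + exact: (sp_g_0_1 HH _ _ Sx Sy Qz).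
  + exact: (sp_g_0_g HH _ Sx Sy).
  + exact: (sp_g_0_g1 HH _ _ Sx Sy Qz).
  + exact: (sp_g_0_1 HH _ _ Sy Sx Qz).
  + by rewrite eqxx in dxy.
  + exact: (sp_g_1_g HH _ _ Sx Sy Qz).
  + exact: (sp_g_1_g1 HH _ Sx Sy).
  + exact: (sp_g_0_g HH _ Sy Sx).
  + exact: (sp_g_1_g HH _ _ Sy Sx Qz).
  + by rewrite eqxx in dxy.
  + exact: (sp_g_g_g1 HH _ _ Sx Sy Qz).
  + exact: (sp_g_0_g1 HH _ _ Sy Sx Qz).
  + exact: (sp_g_1_g1 HH _ Sy Sx).
  + exact: (sp_g_g_g1 HH _ _ Sy Sx Qz).
  + by rewrite eqxx in dxy.
- move=> x y z w u Sx Sy Sz Sw Px Py Pz Pw.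
  have sub : {subset [:: x; y; z; w] <= [:: 0; 1; g; g + 1]}.
    by move=> v Hv; move: Hv Px Py Pz Pw; rewrite !inE => /or4P[]/eqP-> *.
  have mem := fun e : F => @cover4 _ _ _ e (uniqE HH) (u : uniq [:: x; y; z; w]) (erefl _) sub.
  have solv : forall v : F, v \in [:: x; y; z; w] -> Dv g c g v = b.
    by move=> v; rewrite !inE => /or4P[]/eqP->.
  have Si := solv 0 (mem 0 ltac:(by rewrite !inE eqxx ?orbT)).
  have Sj := solv g (mem g ltac:(by rewrite !inE eqxx ?orbT)).
  rewrite ?V0 ?V1 ?Vg ?Vg1 in Si Sj.
  exact: (sp_g_0_g HH _ Si Sj).
Qed.

Lemma core_sp_g1 {F n c g} (HH : Hyp F n c g) (b x1 x2 x3 x4 : F) : uniq [:: x1; x2; x3; x4] ->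
  Dv g c (g + 1) x1 = b -> Dv g c (g + 1) x2 = b -> Dv g c (g + 1) x3 = b -> Dv g c (g + 1) x4 = b -> False.
Proof.
move=> U S1 S2 S3 S4.
have [V0 [V1 [Vg Vg1]]] := svalsg1 HH.
have conv : forall x : F, x \notin [:: 0; 1; g; g + 1] -> x \notin [:: 0; 1; g; (g + 1); (g + 1) + 1; (g + 1) + g].
  move=> x; rewrite -(addrA g 1 1) (two HH) addr0 (addrAC g 1 g) (@addxx2 _ (two HH) g) add0r; rewrite !inE.
  by case: (x == 0); case: (x == 1); case: (x == g); case: (x == g + 1).
apply: (@comb _ (fun x => x \in [:: 0; 1; g; g + 1]) (fun x => Dv g c (g + 1) x = b) _ _ _ _ U S1 S2 S3 S4) => /=.
- move=> x y z u Sx Sy Sz Px Py Pz; case/uniq3: u => dxy dyz dzx.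
  have Q1 := gen_root HH _ _ _ (nz_g1 HH) (conv _ Px) Sx.
  have Q2 := gen_root HH _ _ _ (nz_g1 HH) (conv _ Py) Sy.
  have Q3 := gen_root HH _ _ _ (nz_g1 HH) (conv _ Pz) Sz.
  apply: (@three_roots _ _ _ _ _ _ _ _ dxy dyz dzx Q1 Q2 Q3).
  by rewrite mulf_neq0 // ?(hc0 HH) // (nz_g1 HH).
- move=> x y z u Sx Sy Sz Px Py Pz; case/uniq3: u => dxy _ _.
  have Qz := gen_root HH _ _ _ (nz_g1 HH) (conv _ Pz) Sz.
  move: Px Py dxy Sx Sy; rewrite !inE => /or4P[]/eqP-> /or4P[]/eqP-> dxy; rewrite ?V0 ?V1 ?Vg ?Vg1 => Sx Sy.
  + by rewrite eqxx in dxy.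
  + exact: (sp_g1_0_1 HH _ _ Sx Sy Qz).
  + exact: (sp_g1_0_g HH _ _ Sx Sy Qz).
  + exact: (sp_g1_0_g1 HH _ Sx Sy).
  + exact: (sp_g1_0_1 HH _ _ Sy Sx Qz).
  + by rewrite eqxx in dxy.
  + exact: (sp_g1_1_g HH _ Sx Sy).
  + exact: (sp_g1_1_g1 HH _ _ Sx Sy Qz).
  + exact: (sp_g1_0_g HH _ _ Sy Sx Qz).
  + exact: (sp_g1_1_g HH _ Sy Sx).
  + by rewrite eqxx in dxy.
  + exact: (sp_g1_g_g1 HH _ _ Sx Sy Qz).
  + exact: (sp_g1_0_g1 HH _ Sy Sx).
  + exact: (sp_g1_1_g1 HH _ _ Sy Sx Qz).
  + exact: (sp_g1_g_g1 HH _ _ Sy Sx Qz).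
  + by rewrite eqxx in dxy.
- move=> x y z w u Sx Sy Sz Sw Px Py Pz Pw.
  have sub : {subset [:: x; y; z; w] <= [:: 0; 1; g; g + 1]}.
    by move=> v Hv; move: Hv Px Py Pz Pw; rewrite !inE => /or4P[]/eqP-> *.
  have mem := fun e : F => @cover4 _ _ _ e (uniqE HH) (u : uniq [:: x; y; z; w]) (erefl _) sub.
  have solv : forall v : F, v \in [:: x; y; z; w] -> Dv g c (g + 1) v = b.
    by move=> v; rewrite !inE => /or4P[]/eqP->.
  have Si := solv 0 (mem 0 ltac:(by rewrite !inE eqxx ?orbT)).
  have Sj := solv (g + 1) (mem (g + 1) ltac:(by rewrite !inE eqxx ?orbT)).
  rewrite ?V0 ?V1 ?Vg ?Vg1 in Si Sj.
  exact: (sp_g1_0_g1 HH _ Si Sj).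
Qed.

Definition cinv {F : finFieldType} (g x : F) := if x == 1 then 0 else if x == g then 1 else if x == 0 then g else x.

Lemma cyc3_inj (F : finFieldType) (g : F) : g != 0 -> g != 1 -> injective (cyc3 g).
Proof.
move=> g0 g1; apply: (can_inj (g := cinv g)) => x; rewrite /cyc3 /cinv.
case: (eqVneq x 0) => [->|x0]; first by rewrite eqxx.
case: (eqVneq x 1) => [->|x1]; first by rewrite (negbTE g1) eqxx.
case: (eqVneq x g) => [->|xg]; first by rewrite eq_sym oner_eq0 eq_sym (negbTE g0) eqxx.
by rewrite (negbTE x1) (negbTE xg) (negbTE x0).
Qed.

Lemma Fswap_inj {F n c g} (HH : Hyp F n c g) : injective (Fswap g).
Proof.
pre HH; move=> x y; rewrite /Fswap !InvE // => /invr_inj; exact: cyc3_inj.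
Qed.

Lemma core0 {F n c g} (HH : Hyp F n c g) (b x1 x2 : F) : x1 != x2 ->
  Dv g c 0 x1 = b -> Dv g c 0 x2 = b -> False.
Proof.
move=> d E1 E2; move: E1; rewrite -E2 /Dv !addr0.
rewrite -{1}[Fswap g x1]mul1r -{1}[Fswap g x2]mul1r -!mulrDl => /(mulfI (nz_1c HH)).
by move/(Fswap_inj HH)/eqP; rewrite (negbTE d).
Qed.

Lemma ub {F n c g} (HH : Hyp F n c g) (a b : F) : (cDeltaAB (Fswap g) c a b <= 3)%N.
Proof.
rewrite /cDeltaAB leqNgt; apply/negP => H.
set S := [set x | _] in H.
have [x1 Hx1] : exists x, x \in S by apply/card_gt0P; apply: leq_trans H.
move: H; rewrite (cardsD1 x1) Hx1 add1n ltnS => /card_gt2P [x2 [x3 [x4 [[H2 H3 H4] [d23 d34 d42]]]]].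
move: H2 H3 H4 Hx1; rewrite !inE => /andP[d21 /eqP S2] /andP[d31 /eqP S3] /andP[d41 /eqP S4] /eqP S1.
have U : uniq [:: x1; x2; x3; x4].
  rewrite /= !inE !negb_or !(eq_sym x1) d21 d31 d41 d23 (eq_sym x2) d42 d34.
  done.
have [E|a0] := eqVneq a 0; first by rewrite E in S1 S2; exact: (core0 HH _ _ _ d21 S2 S1).
have [E|a1] := eqVneq a 1; first by rewrite E in S1 S2 S3 S4; exact: (core_sp_1 HH _ _ _ _ _ U S1 S2 S3 S4).
have [E|ag] := eqVneq a g; first by rewrite E in S1 S2 S3 S4; exact: (core_sp_g HH _ _ _ _ _ U S1 S2 S3 S4).
have [E|ag1] := eqVneq a (g + 1); first by rewrite E in S1 S2 S3 S4; exact: (core_sp_g1 HH _ _ _ _ _ U S1 S2 S3 S4).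
exact: (core_gen HH _ _ _ _ _ _ a0 a1 ag ag1 U S1 S2 S3 S4).
Qed.

Lemma lb3 {F : finFieldType} (g c a b x y z : F) : x != y -> y != z -> z != x ->
  Dv g c a x = b -> Dv g c a y = b -> Dv g c a z = b -> (3 <= cDeltaAB (Fswap g) c a b)%N.
Proof.
move=> xy yz zx Ex Ey Ez; apply/card_gt2P; exists x, y, z.
by rewrite !inE -!/(Dv g c a _) Ex Ey Ez eqxx.
Qed.

Lemma Dv_gen {F n c g} (HH : Hyp F n c g) (a x u : F) : x + a = u -> u != 0 -> u != 1 -> u != g ->
  x != 0 -> x != 1 -> x != g -> Dv g c a x = u^-1 + c * x^-1.
Proof. by pre HH => E u0 u1 ug x0 x1 xg; rewrite /Dv E !Gx. Qed.

Lemma Dv_at_a {F n c g} (HH : Hyp F n c g) (a : F) : a != 0 -> a != 1 -> a != g ->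
  Dv g c a a = 1 + c * a^-1.
Proof. by pre HH => a0 a1 ag; rewrite /Dv addxx2 // G0 // Gx. Qed.

Lemma Dv_at_0 {F n c g} (HH : Hyp F n c g) (a : F) : a != 0 -> a != 1 -> a != g ->
  Dv g c a 0 = a^-1 + c.
Proof. by pre HH => a0 a1 ag; rewrite /Dv add0r G0 // mulr1 Gx. Qed.

Lemma Dv_at_a1 {F n c g} (HH : Hyp F n c g) (a : F) : a + 1 != 0 -> a + 1 != 1 -> a + 1 != g ->
  Dv g c a (a + 1) = g^-1 + c * (a + 1)^-1.
Proof. by pre HH => a0 a1 ag; rewrite /Dv addrAC addxx2 // add0r G1 // Gx. Qed.

Lemma nz_mid {F : fieldType} {x y z : F} : x * y / z != 0 -> y != 0.
Proof. by rewrite !mulf_eq0 !negb_or => /andP[/andP[_ ->]]. Qed.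

Lemma lbA {F n c g} (HH : Hyp F n c g) :
  c ^+ 2 + c + 1 != 0 -> c ^+ 3 + c + 1 != 0 -> (3 <= cDeltaAB (Fswap g) c (((c ^+ 2) / (1 + c)))%R ((c)^-1)%R)%N.
Proof.
pre HH => r1 r2.
have n1 : ((c ^+ 2) / (1 + c)) != 0.
{ apply/eqP => E.
have P : ((c - 0) * (c / (1 + c))) = (((c ^+ 2) / (1 + c)) - 0) by field; nzt.
  by apply: (@lin_contra _ _ _ _ _ _ _ hc0 P E); nzp. }
have n2 : ((c ^+ 2) / (1 + c)) != 1.
{ apply/eqP => E.
have P : (((((c ^+ 2) + c) + 1) - 0) * ((1 + c))^-1) = (((c ^+ 2) / (1 + c)) - 1).
  { have -> : (((((c ^+ 2) + c) + 1) - 0) * ((1 + c))^-1) = (((c ^+ 2) / (1 + c)) - 1) + (1 + 1) * ((1%:R + c) / ((1 + c))) by field; nzt.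
    by rewrite two mul0r ?addr0. }
  by apply: (@lin_contra _ _ _ _ _ _ _ r1 P E); nzp. }
have n3 : ((c ^+ 2) / (1 + c)) != g.
{ apply/eqP => E.
  move: (t3 HH) (t7 HH) (t8 HH) => T3 T7 T8.
  rewrite -E in T3 T7 T8.
have S0 : (c + ((c ^+ 2) / (1 + c))) = (c / (1 + c)).
  { have -> : (c + ((c ^+ 2) / (1 + c))) = (c / (1 + c)) + (1 + 1) * ((c ^+ 2) / ((1 + c))) by field; nzt.
    by rewrite two mul0r ?addr0. }
  rewrite ?S0 in T3 T7 T8.
have S1 : (((c ^+ 2) / (1 + c)) + 1) = ((((c ^+ 2) + c) + 1) / (1 + c)) by field; nzt.
  rewrite ?S1 in T3 T7 T8.
have S2 : ((c / (1 + c)) + 1) = ((1 + c))^-1.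
  { have -> : ((c / (1 + c)) + 1) = ((1 + c))^-1 + (1 + 1) * ((c) / ((1 + c))) by field; nzt.
    by rewrite two mul0r ?addr0. }
  rewrite ?S2 in T3 T7 T8.
have I : ((((((c ^+ 2) / (1 + c)) * ((c * ((c ^+ 2) / (1 + c))) + 1)) / (((((c ^+ 2) + c) + 1) / (1 + c)) ^+ 2)) + ((c * (((c ^+ 2) / (1 + c)) ^+ 2)) / ((c / (1 + c)) ^+ 2))) + ((c * ((c ^+ 2) / (1 + c))) / (((1 + c))^-1 ^+ 2))) = ((((((c ^+ 4) + c) + 1) / (((c ^+ 2) + c) + 1)) ^+ 2) + ((((c ^+ 4) + c) + 1) / (((c ^+ 2) + c) + 1))).
  { have -> : ((((((c ^+ 2) / (1 + c)) * ((c * ((c ^+ 2) / (1 + c))) + 1)) / (((((c ^+ 2) + c) + 1) / (1 + c)) ^+ 2)) + ((c * (((c ^+ 2) / (1 + c)) ^+ 2)) / ((c / (1 + c)) ^+ 2))) + ((c * ((c ^+ 2) / (1 + c))) / (((1 + c))^-1 ^+ 2))) = ((((((c ^+ 4) + c) + 1) / (((c ^+ 2) + c) + 1)) ^+ 2) + ((((c ^+ 4) + c) + 1) / (((c ^+ 2) + c) + 1))) + (1 + 1) * ((- (c ^+ 2) - 4%:R * c ^+ 3 - 6%:R * c ^+ 4 - 3%:R * c ^+ 5 + 2%:R * c ^+ 6 + 6%:R * c ^+ 7 + 10%:R * c ^+ 8 + 11%:R * c ^+ 9 + 7%:R * c ^+ 10 + 2%:R * c ^+ 11) / ((1 + c)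 ^+ 2 * (((c ^+ 2) + c) + 1) ^+ 2 * c ^+ 2)) by field; nzt.
    by rewrite two mul0r ?addr0. }
  exact: (@tr_contra3 F two n _ _ _ _ hq T3 T7 T8 I). }
have V4 : Dv g c ((c ^+ 2) / (1 + c)) ((c ^+ 2) / (1 + c)) = (c)^-1.
{ rewrite (Dv_at_a HH ((c ^+ 2) / (1 + c)) n1 n2 n3).
have I : (1 + (c * (((c ^+ 2) / (1 + c)))^-1)) = (c)^-1.
  { have -> : (1 + (c * (((c ^+ 2) / (1 + c)))^-1)) = (c)^-1 + (1 + 1) * ((c ^+ 2) / (c ^+ 2)) by field; nzt.
    by rewrite two mul0r ?addr0. }
  exact: I. }
have n5 : (c / (1 + c)) != 0.
{ apply/eqP => E.
have P : ((c - 0) * ((1 + c))^-1) = ((c / (1 + c)) - 0) by field; nzt.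
  by apply: (@lin_contra _ _ _ _ _ _ _ hc0 P E); nzp. }
have n6 : (c / (1 + c)) != 1.
{ apply/eqP => E.
have P : ((1 - 0) * ((1 + c))^-1) = ((c / (1 + c)) - 1).
  { have -> : ((1 - 0) * ((1 + c))^-1) = ((c / (1 + c)) - 1) + (1 + 1) * ((1%:R) / ((1 + c))) by field; nzt.
    by rewrite two mul0r ?addr0. }
  by apply: (@lin_contra _ _ _ _ _ _ _ (oner_neq0 _) P E); nzp. }
have n7 : (c / (1 + c)) != g.
{ apply/eqP => E.
  move: (t2 HH) => T2.
  rewrite -E in T2.
have I : ((c)^-1 * ((c / (1 + c)))^-1) = (((c)^-1 ^+ 2) + (c)^-1) by field; nzt.
  exact: (@tr_contra1 F two n _ _ hq T2 I). }
have n8 : c != 0 := hc0.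
have n9 : c != 1 := hc1.
have n10 : c != g := hcg.
have V11 : Dv g c ((c ^+ 2) / (1 + c)) c = (c)^-1.
{ have Es : (c + ((c ^+ 2) / (1 + c))) = (c / (1 + c)).
  { have -> : (c + ((c ^+ 2) / (1 + c))) = (c / (1 + c)) + (1 + 1) * ((c ^+ 2) / ((1 + c))) by field; nzt.
    by rewrite two mul0r ?addr0. }
  rewrite (Dv_gen HH _ _ _ Es n5 n6 n7 n8 n9 n10).
have I : (((c / (1 + c)))^-1 + (c * (c)^-1)) = (c)^-1.
  { have -> : (((c / (1 + c)))^-1 + (c * (c)^-1)) = (c)^-1 + (1 + 1) * ((c) / (c)) by field; nzt.
    by rewrite two mul0r ?addr0. }
  exact: I. }
have n12 : (c ^+ 2) != 0.
{ apply/eqP => E.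
have P : ((c - 0) * c) = ((c ^+ 2) - 0) by field; nzt.
  by apply: (@lin_contra _ _ _ _ _ _ _ hc0 P E); nzp. }
have n13 : (c ^+ 2) != 1.
{ apply/eqP => E.
have P : ((c - 1) * (c + 1)) = ((c ^+ 2) - 1) by field; nzt.
  by apply: (@lin_contra _ _ _ _ _ _ _ hc1 P E); nzp. }
have n14 : (c ^+ 2) != g.
{ apply/eqP => E.
  move: (t1 HH) => T1.
  rewrite -E in T1.
have S0 : ((c ^+ 2) + 1) = ((c + 1) ^+ 2).
  { have -> : ((c ^+ 2) + 1) = ((c + 1) ^+ 2) + (1 + 1) * ((- (c)) / (1)) by field; nzt.
    by rewrite two mul0r ?addr0. }
  rewrite ?S0 in T1.
have I : ((c ^+ 2) / (c * ((c + 1) ^+ 2))) = ((((c + 1))^-1 ^+ 2) + ((c + 1))^-1).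
  { have -> : ((c ^+ 2) / (c * ((c + 1) ^+ 2))) = ((((c + 1))^-1 ^+ 2) + ((c + 1))^-1) + (1 + 1) * ((- (c)) / (c * (c + 1) ^+ 2)) by field; nzt.
    by rewrite two mul0r ?addr0. }
  exact: (@tr_contra1 F two n _ _ hq T1 I). }
have n15 : ((c ^+ 3) / (1 + c)) != 0.
{ apply/eqP => E.
have P : ((c - 0) * ((c ^+ 2) / (1 + c))) = (((c ^+ 3) / (1 + c)) - 0) by field; nzt.
  by apply: (@lin_contra _ _ _ _ _ _ _ hc0 P E); nzp. }
have n16 : ((c ^+ 3) / (1 + c)) != 1.
{ apply/eqP => E.
have P : (((((c ^+ 3) + c) + 1) - 0) * ((1 + c))^-1) = (((c ^+ 3) / (1 + c)) - 1).
  { have -> : (((((c ^+ 3) + c) + 1) - 0) * ((1 + c))^-1) = (((c ^+ 3) / (1 + c)) - 1) + (1 + 1) * ((1%:R + c) / ((1 + c))) by field; nzt.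
    by rewrite two mul0r ?addr0. }
  by apply: (@lin_contra _ _ _ _ _ _ _ r2 P E); nzp. }
have n17 : ((c ^+ 3) / (1 + c)) != g.
{ apply/eqP => E.
  move: (t11 HH) => T11.
  rewrite -E in T11.
have I : (c * (((c ^+ 3) / (1 + c)))^-1) = (((c)^-1 ^+ 2) + (c)^-1) by field; nzt.
  exact: (@tr_contra1 F two n _ _ hq T11 I). }
have V18 : Dv g c ((c ^+ 2) / (1 + c)) ((c ^+ 3) / (1 + c)) = (c)^-1.
{ have Es : (((c ^+ 3) / (1 + c)) + ((c ^+ 2) / (1 + c))) = (c ^+ 2) by field; nzt.
  rewrite (Dv_gen HH _ _ _ Es n12 n13 n14 n15 n16 n17).
have I : (((c ^+ 2))^-1 + (c * (((c ^+ 3) / (1 + c)))^-1)) = (c)^-1.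
  { have -> : (((c ^+ 2))^-1 + (c * (((c ^+ 3) / (1 + c)))^-1)) = (c)^-1 + (1 + 1) * ((c) / (c ^+ 3)) by field; nzt.
    by rewrite two mul0r ?addr0. }
  exact: I. }
have n19 : ((c ^+ 2) / (1 + c)) != c.
{ apply/eqP => E.
have P : ((c - 0) * ((1 + c))^-1) = (((c ^+ 2) / (1 + c)) - c).
  { have -> : ((c - 0) * ((1 + c))^-1) = (((c ^+ 2) / (1 + c)) - c) + (1 + 1) * ((c) / ((1 + c))) by field; nzt.
    by rewrite two mul0r ?addr0. }
  by apply: (@lin_contra _ _ _ _ _ _ _ hc0 P E); nzp. }
have n20 : c != ((c ^+ 3) / (1 + c)).
{ apply/eqP => E.
have P : (((((c ^+ 2) + c) + 1) - 0) * (c / (1 + c))) = (c - ((c ^+ 3) / (1 + c))).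
  { have -> : (((((c ^+ 2) + c) + 1) - 0) * (c / (1 + c))) = (c - ((c ^+ 3) / (1 + c))) + (1 + 1) * ((c ^+ 3) / ((1 + c))) by field; nzt.
    by rewrite two mul0r ?addr0. }
  by apply: (@lin_contra _ _ _ _ _ _ _ r1 P E); nzp. }
have n21 : ((c ^+ 3) / (1 + c)) != ((c ^+ 2) / (1 + c)).
{ apply/eqP => E.
have P : ((c - 1) * ((c ^+ 2) / (1 + c))) = (((c ^+ 3) / (1 + c)) - ((c ^+ 2) / (1 + c))) by field; nzt.
  by apply: (@lin_contra _ _ _ _ _ _ _ hc1 P E); nzp. }
exact: (lb3 _ _ _ _ _ _ _ n19 n20 n21 V4 V11 V18).
Qed.

Lemma lbB {F n c g} (HH : Hyp F n c g) :
  c ^+ 2 + c + 1 != 0 -> c ^+ 3 + c ^+ 2 + 1 != 0 -> (3 <= cDeltaAB (Fswap g) c (((c * (c + 1)))^-1)%R ((c ^+ 2))%R)%N.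
Proof.
pre HH => r1 r3.
have n22 : ((c * (c + 1)))^-1 != 0.
{ apply/eqP => E.
have P : ((1 - 0) * ((c * (c + 1)))^-1) = (((c * (c + 1)))^-1 - 0) by field; nzt.
  by apply: (@lin_contra _ _ _ _ _ _ _ (oner_neq0 _) P E); nzp. }
have n23 : ((c * (c + 1)))^-1 != 1.
{ apply/eqP => E.
have P : (((((c ^+ 2) + c) + 1) - 0) * ((c * (c + 1)))^-1) = (((c * (c + 1)))^-1 - 1).
  { have -> : (((((c ^+ 2) + c) + 1) - 0) * ((c * (c + 1)))^-1) = (((c * (c + 1)))^-1 - 1) + (1 + 1) * ((c + c ^+ 2) / (c * (c + 1))) by field; nzt.
    by rewrite two mul0r ?addr0. }
  by apply: (@lin_contra _ _ _ _ _ _ _ r1 P E); nzp. }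
have n24 : ((c * (c + 1)))^-1 != g.
{ apply/eqP => E.
  move: (t4 HH) (t6 HH) (t9 HH) => T4 T6 T9.
  rewrite -E in T4 T6 T9.
have S0 : (((c * ((c * (c + 1)))^-1) + c) + 1) = ((c ^+ 2) / (c + 1)).
  { have -> : (((c * ((c * (c + 1)))^-1) + c) + 1) = ((c ^+ 2) / (c + 1)) + (1 + 1) * ((c + c ^+ 2) / (c * (c + 1))) by field; nzt.
    by rewrite two mul0r ?addr0. }
  rewrite ?S0 in T4 T6 T9.
have S1 : (((c * (c + 1)))^-1 + 1) = ((((c ^+ 2) + c) + 1) / (c * (c + 1))) by field; nzt.
  rewrite ?S1 in T4 T6 T9.
have S2 : ((c * ((c * (c + 1)))^-1) + 1) = (c / (c + 1)).
  { have -> : ((c * ((c * (c + 1)))^-1) + 1) = (c / (c + 1)) + (1 + 1) * ((c) / (c * (c + 1))) by field; nzt.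
    by rewrite two mul0r ?addr0. }
  rewrite ?S2 in T4 T6 T9.
have I : ((((c * ((c * (c + 1)))^-1) / (((c ^+ 2) / (c + 1)) ^+ 2)) + ((((c * (c + 1)))^-1 * (c + ((c * (c + 1)))^-1)) / (c * (((((c ^+ 2) + c) + 1) / (c * (c + 1))) ^+ 2)))) + ((c * (((c * (c + 1)))^-1 ^+ 2)) / ((c / (c + 1)) ^+ 2))) = (((((c + 1) ^+ 2) / ((c ^+ 2) * (((c ^+ 2) + c) + 1))) ^+ 2) + (((c + 1) ^+ 2) / ((c ^+ 2) * (((c ^+ 2) + c) + 1)))).
  { have -> : ((((c * ((c * (c + 1)))^-1) / (((c ^+ 2) / (c + 1)) ^+ 2)) + ((((c * (c + 1)))^-1 * (c + ((c * (c + 1)))^-1)) / (c * (((((c ^+ 2) + c) + 1) / (c * (c + 1))) ^+ 2)))) + ((c * (((c * (c + 1)))^-1 ^+ 2)) / ((c / (c + 1)) ^+ 2))) = (((((c + 1) ^+ 2) / ((c ^+ 2) * (((c ^+ 2) + c) + 1))) ^+ 2) + (((c + 1) ^+ 2) / ((c ^+ 2) * (((c ^+ 2) + c) + 1)))) + (1 + 1) * ((c ^+ 4 + 2%:R * c ^+ 5 + c ^+ 6) / (c ^+ 5 * (c + 1) ^+ 2 * (((c ^+ 2) + c) + 1) ^+ 2)) by field; nzt.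
    by rewrite two mul0r ?addr0. }
  exact: (@tr_contra3 F two n _ _ _ _ hq T4 T6 T9 I). }
have V25 : Dv g c ((c * (c + 1)))^-1 0 = (c ^+ 2).
{ rewrite (Dv_at_0 HH ((c * (c + 1)))^-1 n22 n23 n24).
have I : ((((c * (c + 1)))^-1)^-1 + c) = (c ^+ 2).
  { have -> : ((((c * (c + 1)))^-1)^-1 + c) = (c ^+ 2) + (1 + 1) * ((c) / (1)) by field; nzt.
    by rewrite two mul0r ?addr0. }
  exact: I. }
have n26 : (c)^-1 != 0.
{ apply/eqP => E.
have P : ((1 - 0) * (c)^-1) = ((c)^-1 - 0) by field; nzt.
  by apply: (@lin_contra _ _ _ _ _ _ _ (oner_neq0 _) P E); nzp. }
have n27 : (c)^-1 != 1.
{ apply/eqP => E.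
have P : ((c - 1) * (c)^-1) = ((c)^-1 - 1).
  { have -> : ((c - 1) * (c)^-1) = ((c)^-1 - 1) + (1 + 1) * ((- (1%:R) + c) / (c)) by field; nzt.
    by rewrite two mul0r ?addr0. }
  by apply: (@lin_contra _ _ _ _ _ _ _ hc1 P E); nzp. }
have n28 : (c)^-1 != g.
{ apply/eqP => E.
  by move: hcgi; rewrite -E invrK eqxx. }
have n29 : ((c + 1))^-1 != 0.
{ apply/eqP => E.
have P : ((1 - 0) * ((c + 1))^-1) = (((c + 1))^-1 - 0) by field; nzt.
  by apply: (@lin_contra _ _ _ _ _ _ _ (oner_neq0 _) P E); nzp. }
have n30 : ((c + 1))^-1 != 1.
{ apply/eqP => E.
have P : ((c - 0) * ((c + 1))^-1) = (((c + 1))^-1 - 1).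
  { have -> : ((c - 0) * ((c + 1))^-1) = (((c + 1))^-1 - 1) + (1 + 1) * ((c) / ((c + 1))) by field; nzt.
    by rewrite two mul0r ?addr0. }
  by apply: (@lin_contra _ _ _ _ _ _ _ hc0 P E); nzp. }
have n31 : ((c + 1))^-1 != g.
{ apply/eqP => E.
  move: (t11 HH) => T11.
  rewrite -E in T11.
have I : (c * (((c + 1))^-1)^-1) = ((c ^+ 2) + c) by field; nzt.
  exact: (@tr_contra1 F two n _ _ hq T11 I). }
have V32 : Dv g c ((c * (c + 1)))^-1 ((c + 1))^-1 = (c ^+ 2).
{ have Es : (((c + 1))^-1 + ((c * (c + 1)))^-1) = (c)^-1 by field; nzt.
  rewrite (Dv_gen HH _ _ _ Es n26 n27 n28 n29 n30 n31).
have I : (((c)^-1)^-1 + (c * (((c + 1))^-1)^-1)) = (c ^+ 2).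
  { have -> : (((c)^-1)^-1 + (c * (((c + 1))^-1)^-1)) = (c ^+ 2) + (1 + 1) * ((c) / (1)) by field; nzt.
    by rewrite two mul0r ?addr0. }
  exact: I. }
have n33 : (((c ^+ 2) * (c + 1)))^-1 != 0.
{ apply/eqP => E.
have P : ((1 - 0) * (((c ^+ 2) * (c + 1)))^-1) = ((((c ^+ 2) * (c + 1)))^-1 - 0) by field; nzt.
  by apply: (@lin_contra _ _ _ _ _ _ _ (oner_neq0 _) P E); nzp. }
have n34 : (((c ^+ 2) * (c + 1)))^-1 != 1.
{ apply/eqP => E.
have P : (((((c ^+ 3) + (c ^+ 2)) + 1) - 0) * (((c ^+ 2) * (c + 1)))^-1) = ((((c ^+ 2) * (c + 1)))^-1 - 1).
  { have -> : (((((c ^+ 3) + (c ^+ 2)) + 1) - 0) * (((c ^+ 2) * (c + 1)))^-1) = ((((c ^+ 2) * (c + 1)))^-1 - 1) + (1 + 1) * ((c ^+ 2 + c ^+ 3) / (c ^+ 2 * (c + 1))) by field; nzt.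
    by rewrite two mul0r ?addr0. }
  by apply: (@lin_contra _ _ _ _ _ _ _ r3 P E); nzp. }
have n35 : (((c ^+ 2) * (c + 1)))^-1 != g.
{ apply/eqP => E.
  move: (t2 HH) => T2.
  rewrite -E in T2.
have I : ((c)^-1 * ((((c ^+ 2) * (c + 1)))^-1)^-1) = ((c ^+ 2) + c) by field; nzt.
  exact: (@tr_contra1 F two n _ _ hq T2 I). }
have n36 : ((c ^+ 2))^-1 != 0.
{ apply/eqP => E.
have P : ((1 - 0) * ((c ^+ 2))^-1) = (((c ^+ 2))^-1 - 0) by field; nzt.
  by apply: (@lin_contra _ _ _ _ _ _ _ (oner_neq0 _) P E); nzp. }
have n37 : ((c ^+ 2))^-1 != 1.
{ apply/eqP => E.
have P : ((c - 1) * ((1 + c) / (c ^+ 2))) = (((c ^+ 2))^-1 - 1).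
  { have -> : ((c - 1) * ((1 + c) / (c ^+ 2))) = (((c ^+ 2))^-1 - 1) + (1 + 1) * ((- (1%:R) + c ^+ 2) / (c ^+ 2)) by field; nzt.
    by rewrite two mul0r ?addr0. }
  by apply: (@lin_contra _ _ _ _ _ _ _ hc1 P E); nzp. }
have n38 : ((c ^+ 2))^-1 != g.
{ apply/eqP => E.
  move: (t10 HH) => T10.
  rewrite -E in T10.
have S0 : (((c ^+ 2))^-1 + 1) = (((c + 1) ^+ 2) / (c ^+ 2)).
  { have -> : (((c ^+ 2))^-1 + 1) = (((c + 1) ^+ 2) / (c ^+ 2)) + (1 + 1) * ((- (c)) / (c ^+ 2)) by field; nzt.
    by rewrite two mul0r ?addr0. }
  rewrite ?S0 in T10.
have I : ((c * ((c ^+ 2))^-1) / (((c + 1) ^+ 2) / (c ^+ 2))) = ((((c + 1))^-1 ^+ 2) + ((c + 1))^-1).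
  { have -> : ((c * ((c ^+ 2))^-1) / (((c + 1) ^+ 2) / (c ^+ 2))) = ((((c + 1))^-1 ^+ 2) + ((c + 1))^-1) + (1 + 1) * ((- (c ^+ 2)) / (c ^+ 2 * (c + 1) ^+ 2)) by field; nzt.
    by rewrite two mul0r ?addr0. }
  exact: (@tr_contra1 F two n _ _ hq T10 I). }
have V39 : Dv g c ((c * (c + 1)))^-1 ((c ^+ 2))^-1 = (c ^+ 2).
{ have Es : (((c ^+ 2))^-1 + ((c * (c + 1)))^-1) = (((c ^+ 2) * (c + 1)))^-1.
  { have -> : (((c ^+ 2))^-1 + ((c * (c + 1)))^-1) = (((c ^+ 2) * (c + 1)))^-1 + (1 + 1) * ((c) / (c ^+ 2 * (c + 1))) by field; nzt.
    by rewrite two mul0r ?addr0. }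
  rewrite (Dv_gen HH _ _ _ Es n33 n34 n35 n36 n37 n38).
have I : (((((c ^+ 2) * (c + 1)))^-1)^-1 + (c * (((c ^+ 2))^-1)^-1)) = (c ^+ 2).
  { have -> : (((((c ^+ 2) * (c + 1)))^-1)^-1 + (c * (((c ^+ 2))^-1)^-1)) = (c ^+ 2) + (1 + 1) * ((c ^+ 3) / (1)) by field; nzt.
    by rewrite two mul0r ?addr0. }
  exact: I. }
have n40 : 0 != ((c + 1))^-1.
{ apply/eqP => E.
have P : ((1 - 0) * ((c + 1))^-1) = (0 - ((c + 1))^-1).
  { have -> : ((1 - 0) * ((c + 1))^-1) = (0 - ((c + 1))^-1) + (1 + 1) * ((1%:R) / ((c + 1))) by field; nzt.
    by rewrite two mul0r ?addr0. }
  by apply: (@lin_contra _ _ _ _ _ _ _ (oner_neq0 _) P E); nzp. }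
have n41 : ((c + 1))^-1 != ((c ^+ 2))^-1.
{ apply/eqP => E.
have P : (((((c ^+ 2) + c) + 1) - 0) * (((c ^+ 2) * (c + 1)))^-1) = (((c + 1))^-1 - ((c ^+ 2))^-1).
  { have -> : (((((c ^+ 2) + c) + 1) - 0) * (((c ^+ 2) * (c + 1)))^-1) = (((c + 1))^-1 - ((c ^+ 2))^-1) + (1 + 1) * ((1%:R + c) / (c ^+ 2 * (c + 1))) by field; nzt.
    by rewrite two mul0r ?addr0. }
  by apply: (@lin_contra _ _ _ _ _ _ _ r1 P E); nzp. }
have n42 : ((c ^+ 2))^-1 != 0.
{ apply/eqP => E.
have P : ((1 - 0) * ((c ^+ 2))^-1) = (((c ^+ 2))^-1 - 0) by field; nzt.
  by apply: (@lin_contra _ _ _ _ _ _ _ (oner_neq0 _) P E); nzp. }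
exact: (lb3 _ _ _ _ _ _ _ n40 n41 n42 V25 V32 V39).
Qed.

Lemma lbC {F n c g} (HH : Hyp F n c g) :
  c ^+ 2 + c + 1 = 0 -> (3 <= cDeltaAB (Fswap g) c ((g + c))%R (((g + 1) / (g * ((c * g) + 1))))%R)%N.
Proof.
pre HH => rel.
have n43 : ((g + c) + 1) != 0.
{ apply/eqP => E.
have P : ((c - (g + 1)) * 1) = (((g + c) + 1) - 0).
  { have -> : ((c - (g + 1)) * 1) = (((g + c) + 1) - 0) + (1 + 1) * ((- (1%:R) - g) / (1)) by field; nzt.
    by rewrite two mul0r ?addr0. }
  by apply: (@lin_contra _ _ _ _ _ _ _ hcg1 P E); nzp. }
have n44 : ((g + c) + 1) != 1.
{ apply/eqP => E.
have P : ((c - g) * 1) = (((g + c) + 1) - 1).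
  { have -> : ((c - g) * 1) = (((g + c) + 1) - 1) + (1 + 1) * ((- (g)) / (1)) by field; nzt.
    by rewrite two mul0r ?addr0. }
  by apply: (@lin_contra _ _ _ _ _ _ _ hcg P E); nzp. }
have n45 : ((g + c) + 1) != g.
{ apply/eqP => E.
have P : (((c + 1) - 0) * 1) = (((g + c) + 1) - g) by field; nzt.
  by apply: (@lin_contra _ _ _ _ _ _ _ nz_c1 P E); nzp. }
have V46 : Dv g c (g + c) ((g + c) + 1) = ((g + 1) / (g * ((c * g) + 1))).
{ rewrite (Dv_at_a1 HH (g + c) n43 n44 n45).
have I : ((g)^-1 + (c * (((g + c) + 1))^-1)) = ((g + 1) / (g * ((c * g) + 1))).
  { have -> : ((g)^-1 + (c * (((g + c) + 1))^-1)) = ((g + 1) / (g * ((c * g) + 1))) + (1 + 1) * ((- (g) - g ^+ 2) / (g * ((g + c) + 1) * ((c * g) + 1))) + ((g + g ^+ 2) / (g * ((g + c) + 1) * ((c * g) + 1))) * (((c ^+ 2) + c) + 1) by field; nzt.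
    by rewrite rel mulr0 ?addr0 two mul0r ?addr0. }
  exact: I. }
have n47 : (c * ((c * g) + 1)) != 0.
{ apply/eqP => E.
have P : ((c - 0) * ((c * g) + 1)) = ((c * ((c * g) + 1)) - 0) by field; nzt.
  by apply: (@lin_contra _ _ _ _ _ _ _ hc0 P E); nzp. }
have n48 : (c * ((c * g) + 1)) != 1.
{ apply/eqP => E.
have P : ((g - 1) * (c + 1)) = ((c * ((c * g) + 1)) - 1).
  { have -> : ((g - 1) * (c + 1)) = ((c * ((c * g) + 1)) - 1) + (1 + 1) * ((g - c + c * g) / (1)) + ((- (g)) / (1)) * (((c ^+ 2) + c) + 1) by field; nzt.
    by rewrite rel mulr0 ?addr0 two mul0r ?addr0. }
  by apply: (@lin_contra _ _ _ _ _ _ _ hg1 P E); nzp. }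
have n49 : (c * ((c * g) + 1)) != g.
{ apply/eqP => E.
have P : ((g - 1) * c) = ((c * ((c * g) + 1)) - g).
  { have -> : ((g - 1) * c) = ((c * ((c * g) + 1)) - g) + (1 + 1) * ((g - c + c * g) / (1)) + ((- (g)) / (1)) * (((c ^+ 2) + c) + 1) by field; nzt.
    by rewrite rel mulr0 ?addr0 two mul0r ?addr0. }
  by apply: (@lin_contra _ _ _ _ _ _ _ hg1 P E); nzp. }
have n50 : (c * g) != 0.
{ apply/eqP => E.
have P : ((c - 0) * g) = ((c * g) - 0) by field; nzt.
  by apply: (@lin_contra _ _ _ _ _ _ _ hc0 P E); nzp. }
have n51 : (c * g) != 1.
{ apply/eqP => E.
have P : ((((c * g) + 1) - 0) * 1) = ((c * g) - 1).
  { have -> : ((((c * g) + 1) - 0) * 1) = ((c * g) - 1) + (1 + 1) * ((1%:R) / (1)) by field; nzt.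
    by rewrite two mul0r ?addr0. }
  by apply: (@lin_contra _ _ _ _ _ _ _ nz_cg1 P E); nzp. }
have n52 : (c * g) != g.
{ apply/eqP => E.
have P : ((c - 1) * g) = ((c * g) - g) by field; nzt.
  by apply: (@lin_contra _ _ _ _ _ _ _ hc1 P E); nzp. }
have V53 : Dv g c (g + c) (c * g) = ((g + 1) / (g * ((c * g) + 1))).
{ have Es : ((c * g) + (g + c)) = (c * ((c * g) + 1)).
  { have -> : ((c * g) + (g + c)) = (c * ((c * g) + 1)) + (1 + 1) * ((g + c * g) / (1)) + ((- (g)) / (1)) * (((c ^+ 2) + c) + 1) by field; nzt.
    by rewrite rel mulr0 ?addr0 two mul0r ?addr0. }
  rewrite (Dv_gen HH _ _ _ Es n47 n48 n49 n50 n51 n52).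
have I : (((c * ((c * g) + 1)))^-1 + (c * ((c * g))^-1)) = ((g + 1) / (g * ((c * g) + 1))).
  { have -> : (((c * ((c * g) + 1)))^-1 + (c * ((c * g))^-1)) = ((g + 1) / (g * ((c * g) + 1))) + (1 + 1) * ((- (c * g)) / (c * ((c * g) + 1) * g)) + ((g) / (c * ((c * g) + 1) * g)) * (((c ^+ 2) + c) + 1) by field; nzt.
    by rewrite rel mulr0 ?addr0 two mul0r ?addr0. }
  exact: I. }
have n54 : ((g * (((c + 1) * g) + 1)) / (g + 1)) != 0.
{ apply/eqP => E.
have P : ((g - c) * ((g * (c ^+ 2)) / (g + 1))) = (((g * (((c + 1) * g) + 1)) / (g + 1)) - 0).
  { have -> : ((g - c) * ((g * (c ^+ 2)) / (g + 1))) = (((g * (((c + 1) * g) + 1)) / (g + 1)) - 0) + (1 + 1) * ((- (g) - g ^+ 2 - c * g ^+ 2) / ((g + 1))) + ((g + g ^+ 2 - c * g) / ((g + 1))) * (((c ^+ 2) + c) + 1) by field; nzt.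
    by rewrite rel mulr0 ?addr0 two mul0r ?addr0. }
  by apply: (@lin_contra _ _ _ _ _ _ _ (eqP_sym hcg) P E); nzp. }
have n55 : ((g * (((c + 1) * g) + 1)) / (g + 1)) != 1.
{ apply/eqP => E.
have P : ((((c * g) + 1) - 0) * (((c * g) + 1) / (g + 1))) = (((g * (((c + 1) * g) + 1)) / (g + 1)) - 1).
  { have -> : ((((c * g) + 1) - 0) * (((c * g) + 1) / (g + 1))) = (((g * (((c + 1) * g) + 1)) / (g + 1)) - 1) + (1 + 1) * ((1%:R - g ^+ 2 + c * g - c * g ^+ 2) / ((g + 1))) + ((g ^+ 2) / ((g + 1))) * (((c ^+ 2) + c) + 1) by field; nzt.
    by rewrite rel mulr0 ?addr0 two mul0r ?addr0. }
  by apply: (@lin_contra _ _ _ _ _ _ _ nz_cg1 P E); nzp. }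
have n56 : ((g * (((c + 1) * g) + 1)) / (g + 1)) != g.
{ apply/eqP => E.
have P : ((c - 0) * ((g ^+ 2) / (g + 1))) = (((g * (((c + 1) * g) + 1)) / (g + 1)) - g) by field; nzt.
  by apply: (@lin_contra _ _ _ _ _ _ _ hc0 P E); nzp. }
have n57 : ((c * (((g ^+ 2) + g) + 1)) / (g + 1)) != 0.
{ apply/eqP => E.
have P : ((g - c) * ((c * ((c + g) + 1)) / (g + 1))) = (((c * (((g ^+ 2) + g) + 1)) / (g + 1)) - 0).
  { have -> : ((g - c) * ((c * ((c + g) + 1)) / (g + 1))) = (((c * (((g ^+ 2) + g) + 1)) / (g + 1)) - 0) + ((- (c)) / ((g + 1))) * (((c ^+ 2) + c) + 1) by field; nzt.
    by rewrite rel mulr0 ?addr0. }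
  by apply: (@lin_contra _ _ _ _ _ _ _ (eqP_sym hcg) P E); nzp. }
have n58 : ((c * (((g ^+ 2) + g) + 1)) / (g + 1)) != 1.
{ apply/eqP => E.
  move: (t3 HH) => T.
have I : ((g * ((c * g) + 1)) / ((g + 1) ^+ 2)) = (((c ^+ 2) + c) + ((c / (g + 1)) * (((c * (((g ^+ 2) + g) + 1)) / (g + 1)) - 1))).
  { have -> : ((g * ((c * g) + 1)) / ((g + 1) ^+ 2)) = (((c ^+ 2) + c) + ((c / (g + 1)) * (((c * (((g ^+ 2) + g) + 1)) / (g + 1)) - 1))) + (1 + 1) * ((1%:R + 2%:R * g + g ^+ 2 + c + c * g + c * g ^+ 2) / ((g + 1) ^+ 2)) + ((- (2%:R) - 3%:R * g - 2%:R * g ^+ 2) / ((g + 1) ^+ 2)) * (((c ^+ 2) + c) + 1) by field; nzt.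
    by rewrite rel mulr0 ?addr0 two mul0r ?addr0. }
  rewrite E subrr mulr0 addr0 in I.
  exact: (@tr_contra1 F two n _ _ hq T I). }
have n59 : ((c * (((g ^+ 2) + g) + 1)) / (g + 1)) != g.
{ apply/eqP => E.
  move: (t3 HH) => T.
have I : ((g * ((c * g) + 1)) / ((g + 1) ^+ 2)) = (((g ^+ 2) + g) + (((c * (g ^+ 2)) / (g + 1)) * (((c * (((g ^+ 2) + g) + 1)) / (g + 1)) - g))).
  { have -> : ((g * ((c * g) + 1)) / ((g + 1) ^+ 2)) = (((g ^+ 2) + g) + (((c * (g ^+ 2)) / (g + 1)) * (((c * (((g ^+ 2) + g) + 1)) / (g + 1)) - g))) + (1 + 1) * ((- (g ^+ 2) - g ^+ 3 + c * g ^+ 2 + c * g ^+ 3 + c * g ^+ 4) / ((g + 1) ^+ 2)) + ((- (g ^+ 2) - g ^+ 3 - g ^+ 4) / ((g + 1) ^+ 2)) * (((c ^+ 2) + c) + 1) by field; nzt.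
    by rewrite rel mulr0 ?addr0 two mul0r ?addr0. }
  rewrite E subrr mulr0 addr0 in I.
  exact: (@tr_contra1 F two n _ _ hq T I). }
have ex1 := nz_mid n54.
have ex2 := nz_mid n57.
have V60 : Dv g c (g + c) ((c * (((g ^+ 2) + g) + 1)) / (g + 1)) = ((g + 1) / (g * ((c * g) + 1))).
{ have Es : (((c * (((g ^+ 2) + g) + 1)) / (g + 1)) + (g + c)) = ((g * (((c + 1) * g) + 1)) / (g + 1)).
  { have -> : (((c * (((g ^+ 2) + g) + 1)) / (g + 1)) + (g + c)) = ((g * (((c + 1) * g) + 1)) / (g + 1)) + (1 + 1) * ((c + c * g) / ((g + 1))) by field; nzt.
    by rewrite two mul0r ?addr0. }
  rewrite (Dv_gen HH _ _ _ Es n54 n55 n56 n57 n58 n59).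
have I : ((((g * (((c + 1) * g) + 1)) / (g + 1)))^-1 + (c * (((c * (((g ^+ 2) + g) + 1)) / (g + 1)))^-1)) = ((g + 1) / (g * ((c * g) + 1))).
  { have -> : ((((g * (((c + 1) * g) + 1)) / (g + 1)))^-1 + (c * (((c * (((g ^+ 2) + g) + 1)) / (g + 1)))^-1)) = ((g + 1) / (g * ((c * g) + 1))) + (1 + 1) * ((- (g ^+ 2) - g ^+ 3 - c * g ^+ 2 - 2%:R * c * g ^+ 3 - c * g ^+ 4) / (g * (((c + 1) * g) + 1) * c * (((g ^+ 2) + g) + 1) * ((c * g) + 1))) + ((2%:R * g ^+ 2 + 2%:R * g ^+ 3 + c * g ^+ 3 + c * g ^+ 4) / (g * (((c + 1) * g) + 1) * c * (((g ^+ 2) + g) + 1) * ((c * g) + 1))) * (((c ^+ 2) + c) + 1) by field; nzt.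
    by rewrite rel mulr0 ?addr0 two mul0r ?addr0. }
  exact: I. }
have n61 : ((g + c) + 1) != (c * g).
{ apply/eqP => E.
have P : ((g - 1) * (c + 1)) = (((g + c) + 1) - (c * g)).
  { have -> : ((g - 1) * (c + 1)) = (((g + c) + 1) - (c * g)) + (1 + 1) * ((- (1%:R) - c + c * g) / (1)) by field; nzt.
    by rewrite two mul0r ?addr0. }
  by apply: (@lin_contra _ _ _ _ _ _ _ hg1 P E); nzp. }
have n62 : (c * g) != ((c * (((g ^+ 2) + g) + 1)) / (g + 1)).
{ apply/eqP => E.
have P : ((c - 0) * ((g + 1))^-1) = ((c * g) - ((c * (((g ^+ 2) + g) + 1)) / (g + 1))).
  { have -> : ((c - 0) * ((g + 1))^-1) = ((c * g) - ((c * (((g ^+ 2) + g) + 1)) / (g + 1))) + (1 + 1) * ((c) / ((g + 1))) by field; nzt.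
    by rewrite two mul0r ?addr0. }
  by apply: (@lin_contra _ _ _ _ _ _ _ hc0 P E); nzp. }
have n63 : ((c * (((g ^+ 2) + g) + 1)) / (g + 1)) != ((g + c) + 1).
{ apply/eqP => E.
have P : ((((c * g) + 1) - 0) * (((c * g) + 1) / (g + 1))) = (((c * (((g ^+ 2) + g) + 1)) / (g + 1)) - ((g + c) + 1)).
  { have -> : ((((c * g) + 1) - 0) * (((c * g) + 1) / (g + 1))) = (((c * (((g ^+ 2) + g) + 1)) / (g + 1)) - ((g + c) + 1)) + (1 + 1) * ((1%:R + g + c * g - c * g ^+ 2) / ((g + 1))) + ((g ^+ 2) / ((g + 1))) * (((c ^+ 2) + c) + 1) by field; nzt.
    by rewrite rel mulr0 ?addr0 two mul0r ?addr0. }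
  by apply: (@lin_contra _ _ _ _ _ _ _ nz_cg1 P E); nzp. }
exact: (lb3 _ _ _ _ _ _ _ n61 n62 n63 V46 V53 V60).
Qed.

Lemma lb {F n c g} (HH : Hyp F n c g) : exists ab : F * F, (3 <= cDeltaAB (Fswap g) c ab.1 ab.2)%N.
Proof.
have [rel|r1] := eqVneq (c ^+ 2 + c + 1) 0.
  by eexists (_, _); exact: (lbC HH rel).
have [rel3|r2] := eqVneq (c ^+ 3 + c + 1) 0.
  have r3 : c ^+ 3 + c ^+ 2 + 1 != 0.
    have -> : c ^+ 3 + c ^+ 2 + 1 = c * (c - 1) + (c ^+ 3 + c + 1) by ring.
    by rewrite rel3 addr0 mulf_neq0 ?(hc0 HH) // subr_eq0 (hc1 HH).
  by eexists (_, _); exact: (lbB HH r1 r3).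
by eexists (_, _); exact: (lbA HH r1 r2).
Qed.

Theorem mainTheorem8 (F : finFieldType) (n : nat) (c g : F) :
  (2%N \in [pchar F]) -> #|F| = (2 ^ n)%N -> (4 <= n)%N ->
  c != 0 -> c != 1 -> g != 0 -> g != 1 ->
  c \notin [:: g; g^-1; g + 1; (g + 1)^-1] ->
  tr n (g / (c * (g + 1))) = 1 ->
  tr n (c^-1 * g^-1) = 1 ->
  tr n (g * (c * g + 1) / (g + 1) ^+ 2) = 1 ->
  tr n (c * g / (c * g + c + 1) ^+ 2) = 1 ->
  tr n (g * (c + g + 1) / (c * (g + 1) ^+ 2)) = 1 ->
  tr n (g * (c + g) / (c * (g + 1) ^+ 2)) = 1 ->
  tr n (c * g ^+ 2 / (c + g) ^+ 2) = 1 ->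
  tr n (c * g / (c + g + 1) ^+ 2) = 1 ->
  tr n (c * g ^+ 2 / (c * g + 1) ^+ 2) = 1 ->
  tr n (c * g / (g + 1)) = 1 ->
  tr n (c * g^-1) = 1 ->
  tr n ((c * g + c + 1) * g / (g + 1) ^+ 2) = 1 ->
  cDelta (Fswap g) c = 3%N.
Proof.
move=> pc hq hn c0 c1 g0 g1 cnot t1 t2 t3 t4 t5 t6 t7 t8 t9 t10 t11 t12.
move: cnot; rewrite !inE !negb_or => /andP[cg /andP[cgi /andP[cg1 cg1i]]].
have HH : Hyp F n c g := @MkHyp F n c g (@two_eq0 F pc) hq hn c0 c1 g0 g1 cg cgi cg1 cg1i
  t1 t2 t3 t4 t5 t6 t7 t8 t9 t10 t11 t12.
apply/eqP; rewrite eqn_leq; apply/andP; split.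
  by apply/bigmax_leqP => p _; exact: (ub HH).
have [[a b] H3] := lb HH.
apply: leq_trans H3 _.
by apply: (@leq_bigmax_cond _ _ (fun p : F * F => cDeltaAB (Fswap g) c p.1 p.2) (a, b)); rewrite c1.
Qed.
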